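(* For every fixed $\alpha>0$, the functions $(x,y)\mapsto\theta_{(x,y)}(b(x,y);\alpha)$ and $(x,y)\mapsto\widehat\theta_{(x,y)}(b(x,y);\alpha)$ (defined for $x\in\mathbb{R}$, $y>0$) have vanishing gradient at $(x,y)=(1/2,\sqrt3/2)$.
   Context: For $y>0$, $c=(c_1,c_2)\in\mathbb{R}^2$, $\alpha>0$: $\theta_{(x,y)}(c;\alpha)=\sum_{k,l\in\mathbb{Z}}\exp(-\tfrac{\pi\alpha}{y}((k+c_1)^2+2x(k+c_1)(l+c_2)+(x^2+y^2)(l+c_2)^2))$ and $\widehat\theta_{(x,y)}(c;\alpha)=\sum_{k,l\in\mathbb{Z}}\exp(-\tfrac{\pi\alpha}{y}(k^2+2xkl+(x^2+y^2)l^2))e^{2\pi i(kc_2-lc_1)}$. $b(x,y)=(b_1,b_2)$ with $b_1=\frac{x+(1-x)4y^2}{8y^2}$, $b_2=\frac{4y^2-1}{8y^2}$. *)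

(* Defs.v *)
From Stdlib Require Import Reals ZArith.
From Coquelicot Require Import Coquelicot.
Open Scope R_scope.

(* Sum over Z of f : Z -> R, as sum over n >= 0 of f n plus sum over n >= 1 of f (-n).
   (All sums used below are absolutely convergent, so this is the usual sum over Z.) *)
Definition sumZ (f : Z -> R) : R :=
  Series (fun n : nat => f (Z.of_nat n)) + Series (fun n : nat => f (- Z.of_nat (S n))%Z).

Definition sumZ2 (f : Z -> Z -> R) : R := sumZ (fun k => sumZ (fun l => f k l)).

Definition theta (x y c1 c2 alpha : R) : R :=
  sumZ2 (fun k l =>
    exp (- (PI * alpha / y) *
      ((IZR k + c1) ^ 2 + 2 * x * (IZR k + c1) * (IZR l + c2)
       + (x ^ 2 + y ^ 2) * (IZR l + c2) ^ 2))).

Definition gaussw (x y alpha : R) (k l : Z) : R :=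
  exp (- (PI * alpha / y) *
    (IZR k ^ 2 + 2 * x * IZR k * IZR l + (x ^ 2 + y ^ 2) * IZR l ^ 2)).

(* hat theta_{(x,y)}(c;alpha) : complex valued; e^{2 pi i t} = cos(2 pi t) + i sin(2 pi t),
   real and imaginary parts summed separately. *)
Definition thetahat (x y c1 c2 alpha : R) : C :=
  (sumZ2 (fun k l => gaussw x y alpha k l * cos (2 * PI * (IZR k * c2 - IZR l * c1))),
   sumZ2 (fun k l => gaussw x y alpha k l * sin (2 * PI * (IZR k * c2 - IZR l * c1)))).

Definition b1 (x y : R) : R := (x + (1 - x) * 4 * y ^ 2) / (8 * y ^ 2).
Definition b2 (x y : R) : R := (4 * y ^ 2 - 1) / (8 * y ^ 2).

Definition Theta_b (alpha x y : R) : R := theta x y (b1 x y) (b2 x y) alpha.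
Definition ThetaHat_b (alpha x y : R) : C := thetahat x y (b1 x y) (b2 x y) alpha.

(* Main.v *)
Require Import Defs.
From Stdlib Require Import Reals ZArith Lra Lia.
From Coquelicot Require Import Coquelicot.
Open Scope R_scope.


Lemma exp_INR_pow (d : R) (n : nat) : exp (d * INR n) = exp d ^ n.
Proof.
  induction n as [|n IH]; simpl. rewrite Rmult_0_r; apply exp_0.
  rewrite <- IH. rewrite <- exp_plus. f_equal. destruct n; simpl; ring.
Qed.

Lemma ex_series_bound (a : nat -> R) (C q : R) :
  0 <= q < 1 -> (forall n, Rabs (a n) <= C * q ^ n) ->
  ex_series (fun n => Rabs (a n)) /\ ex_series a.
Proof.
  intros Hq H.
  assert (Hg : ex_series (fun n => C * q ^ n)).
  { apply (ex_series_scal_l C (fun n => q ^ n)). apply ex_series_geom. rewrite Rabs_pos_eq; lra. }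
  assert (H1 : ex_series (fun n => Rabs (a n))).
  { apply (ex_series_le (fun n => Rabs (a n)) (fun n => C * q ^ n)); auto.
    intro n. unfold norm; simpl. unfold abs; simpl. rewrite Rabs_Rabsolu. apply H. }
  split; auto. apply ex_series_Rabs; auto.
Qed.

Lemma Series_bound (a : nat -> R) (C q : R) :
  0 <= q < 1 -> (forall n, Rabs (a n) <= C * q ^ n) ->
  Rabs (Series a) <= C / (1 - q).
Proof.
  intros Hq H. destruct (ex_series_bound a C q Hq H) as [H1 H2].
  eapply Rle_trans. apply Series_Rabs; auto.
  replace (C / (1 - q)) with (Series (fun n => C * q ^ n)).
  apply Series_le. intro n; split; [apply Rabs_pos| apply H].
  apply (ex_series_scal_l C (fun n => q ^ n)). apply ex_series_geom. rewrite Rabs_pos_eq; lra.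
  rewrite Series_scal_l, Series_geom. unfold Rdiv; ring. rewrite Rabs_pos_eq; lra.
Qed.

Lemma pow_le1 (q : R) n : 0 <= q <= 1 -> q ^ n <= 1.
Proof. intros H; induction n; simpl. lra. pose proof (pow_le q n (proj1 H)). nra. Qed.

Lemma Series_nonneg (a : nat -> R) : (forall n, 0 <= a n) -> ex_series a -> 0 <= Series a.
Proof.
  intros H He. replace 0 with (Series (fun n => 0 * a n)).
  apply Series_le; auto. intro n; specialize (H n); split; lra.
  rewrite Series_scal_l; ring.
Qed.

Definition BZ (C d : R) (k : Z) : R := C * exp (- d * Rabs (IZR k)).

Lemma Rabs_IZR_nat n : Rabs (IZR (Z.of_nat n)) = INR n.
Proof. rewrite <- INR_IZR_INZ. apply Rabs_pos_eq, pos_INR. Qed.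

Lemma Rabs_IZR_negS n : Rabs (IZR (- Z.of_nat (S n))) = INR (S n).
Proof. rewrite Ropp_Ropp_IZR, <- INR_IZR_INZ, Rabs_Ropp. apply Rabs_pos_eq, pos_INR. Qed.

Lemma BZ_C_nonneg g C d : (forall k, Rabs (g k) <= BZ C d k) -> 0 <= C.
Proof.
  intros H. specialize (H 0%Z). unfold BZ in H. pose proof (Rabs_pos (g 0%Z)).
  pose proof (exp_pos (- d * Rabs (IZR 0))).
  destruct (Rle_or_lt 0 C); auto. nra.
Qed.

Section OneD.
Variables (g : Z -> R) (C d : R).
Hypothesis Hd : 0 < d.
Hypothesis Hg : forall k, Rabs (g k) <= BZ C d k.

Let q := exp (- d).
Lemma q_range : 0 <= q < 1.
Proof. unfold q. split. left; apply exp_pos. rewrite <- exp_0. apply exp_increasing. lra. Qed.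

Lemma Cnn : 0 <= C.
Proof. exact (BZ_C_nonneg g C d Hg). Qed.

Lemma bpos n : Rabs (g (Z.of_nat n)) <= C * q ^ n.
Proof.
  eapply Rle_trans. apply Hg. unfold BZ. rewrite Rabs_IZR_nat.
  unfold q. rewrite <- exp_INR_pow. right; reflexivity.
Qed.

Lemma bnegS n : Rabs (g (- Z.of_nat (S n))) <= C * q ^ (S n).
Proof.
  eapply Rle_trans. apply Hg. unfold BZ. rewrite Rabs_IZR_negS.
  unfold q. rewrite <- exp_INR_pow. right; reflexivity.
Qed.

Lemma bneg n : Rabs (g (- Z.of_nat (S n))) <= C * q ^ n.
Proof.
  eapply Rle_trans. apply bnegS. pose proof q_range. pose proof Cnn.
  simpl. apply Rmult_le_compat_l; auto.
  pose proof (pow_le q n (proj1 H)). nra.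
Qed.

Lemma exs_pos : ex_series (fun n => g (Z.of_nat n)).
Proof. apply (ex_series_bound _ C q q_range bpos). Qed.
Lemma exs_neg : ex_series (fun n => g (- Z.of_nat (S n))).
Proof. apply (ex_series_bound _ C q q_range bneg). Qed.

Lemma sumZ_bound : Rabs (sumZ g) <= 2 * C / (1 - q).
Proof.
  unfold sumZ. eapply Rle_trans. apply Rabs_triang.
  pose proof (Series_bound _ C q q_range bpos).
  pose proof (Series_bound _ C q q_range bneg).
  replace (2 * C / (1 - q)) with (C / (1 - q) + C / (1 - q)) by (field; pose proof q_range; lra).
  lra.
Qed.

Definition SN (N : nat) : R :=
  sum_f_R0 (fun n => g (Z.of_nat n)) N + sum_f_R0 (fun n => g (- Z.of_nat (S n))) N.

Lemma tail_bound (a : nat -> R) N :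
  (forall n, Rabs (a n) <= C * q ^ n) ->
  Rabs (Series a - sum_f_R0 a N) <= C * q ^ (S N) / (1 - q).
Proof.
  intros H. destruct (ex_series_bound a C q q_range H) as [_ Hex].
  rewrite (Series_incr_n a (S N)); [|lia|auto]. simpl Init.Nat.pred.
  replace (sum_f_R0 a N + Series (fun k => a (S N + k)%nat) - sum_f_R0 a N)
    with (Series (fun k => a (S N + k)%nat)) by ring.
  replace (C * q ^ S N / (1 - q)) with ((C * q ^ S N) / (1 - q)) by ring.
  apply Series_bound. apply q_range. intro n. rewrite Rmult_assoc, <- pow_add. apply H.
Qed.

Lemma SN_tail N : Rabs (sumZ g - SN N) <= 2 * C * q ^ (S N) / (1 - q).
Proof.
  unfold sumZ, SN.
  replace (Series (fun n => g (Z.of_nat n)) + Series (fun n => g (- Z.of_nat (S n))) -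
     (sum_f_R0 (fun n => g (Z.of_nat n)) N + sum_f_R0 (fun n => g (- Z.of_nat (S n))) N))
  with ((Series (fun n => g (Z.of_nat n)) - sum_f_R0 (fun n => g (Z.of_nat n)) N) +
        (Series (fun n => g (- Z.of_nat (S n))) - sum_f_R0 (fun n => g (- Z.of_nat (S n))) N)) by ring.
  eapply Rle_trans. apply Rabs_triang.
  pose proof (tail_bound _ N bpos). pose proof (tail_bound _ N bneg).
  replace (2 * C * q ^ S N / (1 - q)) with (C * q ^ S N / (1 - q) + C * q ^ S N / (1 - q))
    by (field; pose proof q_range; lra). lra.
Qed.

Lemma sum_f_bound (a : nat -> R) N : (forall n, Rabs (a n) <= C * q ^ n) ->
  Rabs (sum_f_R0 a N) <= C / (1 - q).
Proof.
  intros H. destruct (ex_series_bound a C q q_range H) as [Habs _].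
  eapply Rle_trans. apply sum_f_R0_triangle.
  eapply Rle_trans with (Series (fun n => Rabs (a n))).
  - rewrite (Series_incr_n _ (S N)); [|lia|auto]. simpl Init.Nat.pred.
    cut (0 <= Series (fun k => Rabs (a (S N + k)%nat))). lra.
    apply Series_nonneg. intros; apply Rabs_pos.
    refine (proj1 (ex_series_bound _ C q q_range _)).
    intro n. pose proof (H (S N + n)%nat). rewrite pow_add in H0.
    pose proof q_range. pose proof (pow_le q (S N) (proj1 H1)). pose proof (pow_le q n (proj1 H1)).
    pose proof Cnn.
    assert (q ^ S N <= 1) by (apply pow_le1; lra).
    assert (C * (q ^ S N * q ^ n) <= C * q ^ n) by (apply Rmult_le_compat_l; nra). lra.
  - replace (Series (fun n => Rabs (a n))) with (Rabs (Series (fun n => Rabs (a n)))).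
    apply Series_bound. apply q_range. intro n; rewrite Rabs_Rabsolu; apply H.
    apply Rabs_pos_eq, Series_nonneg; auto. intros; apply Rabs_pos.
Qed.

Lemma SN_bound N : Rabs (SN N) <= 2 * C / (1 - q).
Proof.
  unfold SN. eapply Rle_trans. apply Rabs_triang.
  pose proof (sum_f_bound _ N bpos). pose proof (sum_f_bound _ N bneg).
  replace (2 * C / (1 - q)) with (C / (1 - q) + C / (1 - q)) by (field; pose proof q_range; lra).
  lra.
Qed.

Lemma bmneg n : Rabs (g (- Z.of_nat n)) <= C * q ^ n.
Proof.
  eapply Rle_trans. apply Hg. unfold BZ. rewrite Ropp_Ropp_IZR, Rabs_Ropp, Rabs_IZR_nat.
  unfold q. rewrite <- exp_INR_pow. right; reflexivity.
Qed.

Lemma exs_mneg : ex_series (fun n => g (- Z.of_nat n)).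
Proof. apply (ex_series_bound _ C q q_range bmneg). Qed.

Lemma sumZ_shift1 : sumZ (fun k => g (k + 1)%Z) = sumZ g.
Proof.
  unfold sumZ.
  rewrite (Series_ext (fun n => g (Z.of_nat n + 1)%Z) (fun n => g (Z.of_nat (S n)))).
  2: { intro n; f_equal; lia. }
  rewrite (Series_ext (fun n => g (- Z.of_nat (S n) + 1)%Z) (fun n => g (- Z.of_nat n)%Z)).
  2: { intro n; f_equal; lia. }
  rewrite (Series_incr_1 (fun n => g (Z.of_nat n))) by apply exs_pos.
  rewrite (Series_incr_1 (fun n => g (- Z.of_nat n)%Z)) by apply exs_mneg.
  simpl. ring.
Qed.

Lemma sumZ_neg : sumZ (fun k => g (- k)%Z) = sumZ g.
Proof.
  unfold sumZ.
  rewrite (Series_ext (fun n => g (- - Z.of_nat (S n))%Z) (fun n => g (Z.of_nat (S n)))).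
  2: { intro n; f_equal; lia. }
  rewrite (Series_incr_1 (fun n => g (Z.of_nat n))) by apply exs_pos.
  rewrite (Series_incr_1 (fun n => g (- Z.of_nat n)%Z)) by apply exs_mneg.
  simpl. ring.
Qed.

End OneD.

Lemma sumZ_plus f g Cf df Cg dg : 0 < df -> 0 < dg ->
  (forall k, Rabs (f k) <= BZ Cf df k) -> (forall k, Rabs (g k) <= BZ Cg dg k) ->
  sumZ (fun k => f k + g k) = sumZ f + sumZ g.
Proof.
  intros. unfold sumZ.
  rewrite (Series_plus (fun n => f (Z.of_nat n)) (fun n => g (Z.of_nat n))) by first [apply (exs_pos f Cf df); auto | apply (exs_pos g Cg dg); auto].
  rewrite (Series_plus (fun n => f (- Z.of_nat (S n))%Z) (fun n => g (- Z.of_nat (S n))%Z))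
    by first [apply (exs_neg f Cf df); auto | apply (exs_neg g Cg dg); auto].
  ring.
Qed.

Lemma sumZ_scal c f : sumZ (fun k => c * f k) = c * sumZ f.
Proof. unfold sumZ. rewrite !Series_scal_l. ring. Qed.

Lemma sumZ_ext f g : (forall k, f k = g k) -> sumZ f = sumZ g.
Proof. intros H. unfold sumZ. rewrite (Series_ext _ _ (fun n => H _)), (Series_ext _ _ (fun n => H _)). auto. Qed.

Lemma exp_mono a b : a <= b -> exp a <= exp b.
Proof. intros [H|H]. left; apply exp_increasing; auto. subst; lra. Qed.

Lemma BZ_shift g C d c : 0 < d -> (forall k, Rabs (g k) <= BZ C d k) ->
  forall k, Rabs (g (k + c)%Z) <= BZ (C * exp (d * Rabs (IZR c))) d k.
Proof.
  intros Hd H k. eapply Rle_trans. apply H. unfold BZ.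
  pose proof (BZ_C_nonneg g C d H).
  rewrite Rmult_assoc, <- exp_plus. apply Rmult_le_compat_l; auto.
  apply exp_mono.
  rewrite plus_IZR.
  pose proof (Rabs_triang (IZR k + IZR c) (- IZR c)). rewrite Rabs_Ropp in H1.
  replace (IZR k + IZR c + - IZR c) with (IZR k) in H1 by ring.
  nra.
Qed.

Lemma sumZ_shift_nat g C d n : 0 < d -> (forall k, Rabs (g k) <= BZ C d k) ->
  sumZ (fun k => g (k + Z.of_nat n)%Z) = sumZ g /\ sumZ (fun k => g (k - Z.of_nat n)%Z) = sumZ g.
Proof.
  intros Hd H. induction n as [|n [IH1 IH2]].
  - split; apply sumZ_ext; intro k; f_equal; simpl; lia.
  - split.
    + rewrite <- IH1.
      rewrite <- (sumZ_shift1 (fun k => g (k + Z.of_nat n)%Z) _ d Hd (BZ_shift g C d _ Hd H)).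
      apply sumZ_ext; intro k; f_equal; lia.
    + rewrite <- IH2.
      rewrite <- (sumZ_shift1 (fun k => g (k - Z.of_nat (S n))%Z) _ d Hd (BZ_shift g C d _ Hd H)).
      apply sumZ_ext; intro k; f_equal; lia.
Qed.

Lemma sumZ_shift g C d c : 0 < d -> (forall k, Rabs (g k) <= BZ C d k) ->
  sumZ (fun k => g (k + c)%Z) = sumZ g.
Proof.
  intros Hd H. destruct (Z_le_gt_dec 0 c).
  - rewrite <- (proj1 (sumZ_shift_nat g C d (Z.to_nat c) Hd H)).
    apply sumZ_ext; intro k; f_equal; lia.
  - rewrite <- (proj2 (sumZ_shift_nat g C d (Z.to_nat (- c)) Hd H)).
    apply sumZ_ext; intro k; f_equal; lia.
Qed.

Lemma sumZ_refl g C d c : 0 < d -> (forall k, Rabs (g k) <= BZ C d k) ->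
  sumZ (fun k => g (c - k)%Z) = sumZ g.
Proof.
  intros Hd H.
  rewrite <- (sumZ_shift g C d c Hd H).
  rewrite <- (sumZ_neg (fun k => g (k + c)%Z) _ d Hd (BZ_shift g C d c Hd H)).
  apply sumZ_ext; intro k; f_equal; lia.
Qed.

Definition BZ2 (C d : R) (k l : Z) : R := C * exp (- d * (Rabs (IZR k) + Rabs (IZR l))).

Section TwoD.
Variables (h : Z -> Z -> R) (C d : R).
Hypothesis Hd : 0 < d.
Hypothesis Hh : forall k l, Rabs (h k l) <= BZ2 C d k l.

Let q := exp (- d).

Lemma row_bound k : forall l, Rabs (h k l) <= BZ (C * exp (- d * Rabs (IZR k))) d l.
Proof.
  intro l. eapply Rle_trans. apply Hh. unfold BZ2, BZ. rewrite Rmult_assoc, <- exp_plus.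
  right; f_equal; f_equal; ring.
Qed.

Lemma inner_bound : forall k, Rabs (sumZ (h k)) <= BZ (2 * C / (1 - q)) d k.
Proof.
  intro k. eapply Rle_trans. apply (sumZ_bound (h k) _ d Hd (row_bound k)).
  unfold BZ. fold q. right. field. pose proof (q_range d Hd). fold q in H. lra.
Qed.

Lemma C2nn : 0 <= C.
Proof.
  pose proof (BZ_C_nonneg _ _ _ (row_bound 0%Z)). pose proof (exp_pos (- d * Rabs (IZR 0))).
  destruct (Rle_or_lt 0 C); auto. nra.
Qed.

Lemma sumZ2_bound : Rabs (sumZ2 h) <= 2 * (2 * C / (1 - q)) / (1 - q).
Proof. unfold sumZ2. apply (sumZ_bound _ _ d Hd inner_bound). Qed.

Definition PN (h' : Z -> Z -> R) N := SN (fun k => SN (fun l => h' k l) N) N.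

Lemma PN_approx N : Rabs (sumZ2 h - PN h N) <= 8 * C * q ^ (S N) / ((1 - q) * (1 - q)).
Proof.
  pose proof (q_range d Hd) as Hq. fold q in Hq.
  unfold sumZ2, PN.
  set (I := fun k => sumZ (h k)).
  replace (sumZ I - SN (fun k => SN (fun l => h k l) N) N) with
    ((sumZ I - SN I N) + SN (fun k => I k - SN (fun l => h k l) N) N).
  2: { unfold SN. rewrite !minus_sum. ring. }
  eapply Rle_trans. apply Rabs_triang.
  pose proof (SN_tail I _ d Hd inner_bound N) as T1. fold q in T1.
  assert (B2 : forall k, Rabs (I k - SN (fun l => h k l) N) <= BZ (2 * C * q ^ S N / (1 - q)) d k).
  { intro k. eapply Rle_trans. apply (SN_tail (h k) _ d Hd (row_bound k) N).
    unfold BZ. fold q. right. field. lra. }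
  pose proof (SN_bound _ _ d Hd B2 N) as T2. fold q in T2.
  replace (8 * C * q ^ S N / ((1 - q) * (1 - q))) with
    (2 * (2 * C / (1 - q)) * q ^ S N / (1 - q) + 2 * (2 * C * q ^ S N / (1 - q)) / (1 - q)).
  lra. field. lra.
Qed.

End TwoD.

Definition pt (n : nat) : Z := Z.of_nat n.
Definition mt (n : nat) : Z := (- Z.of_nat (S n))%Z.

Lemma SN_alt g N : SN g N = sum_f_R0 (fun n => g (pt n) + g (mt n)) N.
Proof. unfold SN. rewrite plus_sum. reflexivity. Qed.

Lemma sum_f_R0_ext (a b : nat -> R) N : (forall n, a n = b n) -> sum_f_R0 a N = sum_f_R0 b N.
Proof. intros H; induction N; simpl; rewrite ?IHN, ?H; auto. Qed.

Lemma sum_switch (u : nat -> nat -> R) N :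
  sum_f_R0 (fun i => sum_f_R0 (u i) N) N = sum_f_R0 (fun j => sum_f_R0 (fun i => u i j) N) N.
Proof.
  rewrite <- sum_n_Reals.
  rewrite (sum_n_ext _ (fun i => sum_n (u i) N)) by (intro; rewrite sum_n_Reals; auto).
  rewrite sum_n_switch, sum_n_Reals. apply sum_f_R0_ext. intro; rewrite sum_n_Reals; auto.
Qed.

Lemma PN_swap h N : PN (fun k l => h l k) N = PN h N.
Proof.
  unfold PN. rewrite !SN_alt.
  rewrite (sum_f_R0_ext _ (fun i => sum_f_R0 (fun j => h (pt j) (pt i) + h (mt j) (pt i) + (h (pt j) (mt i) + h (mt j) (mt i))) N)).
  2: { intro n. rewrite !SN_alt, <- plus_sum. apply sum_f_R0_ext. intro; ring. }
  rewrite sum_switch.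
  apply sum_f_R0_ext. intro n. rewrite !SN_alt, <- plus_sum. apply sum_f_R0_ext. intro; ring.
Qed.

Lemma sumZ2_swap h C d : 0 < d -> (forall k l, Rabs (h k l) <= BZ2 C d k l) ->
  sumZ2 (fun k l => h l k) = sumZ2 h.
Proof.
  intros Hd Hh.
  assert (Hh' : forall k l, Rabs (h l k) <= BZ2 C d k l).
  { intros k l. eapply Rle_trans. apply Hh. unfold BZ2. right; f_equal; f_equal; f_equal; ring. }
  pose proof (q_range d Hd) as Hq. pose proof (C2nn h C d Hh) as HC.
  set (q := exp (- d)) in *.
  apply Rminus_diag_uniq. apply Rabs_eq_0.
  destruct (Rle_lt_or_eq_dec 0 _ (Rabs_pos (sumZ2 (fun k l => h l k) - sumZ2 h))) as [Hp|He]; [|auto].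
  exfalso.
  set (D := Rabs (sumZ2 (fun k l => h l k) - sumZ2 h)) in *.
  set (K := 16 * (C + 1) / ((1 - q) * (1 - q))).
  assert (HK : 0 < K). { unfold K. apply Rdiv_lt_0_compat. lra. nra. }
  destruct (pow_lt_1_zero q ltac:(rewrite Rabs_pos_eq; lra) (D / K) ltac:(apply Rdiv_lt_0_compat; lra)) as [N HN].
  specialize (HN (S N) ltac:(lia)). rewrite Rabs_pos_eq in HN by (apply pow_le; lra).
  pose proof (PN_approx _ C d Hd Hh N) as A1. pose proof (PN_approx _ C d Hd Hh' N) as A2.
  fold q in A1, A2. rewrite PN_swap in A2.
  assert (D <= 16 * C * q ^ S N / ((1 - q) * (1 - q))).
  { unfold D. replace (sumZ2 (fun k l => h l k) - sumZ2 h) with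
      ((sumZ2 (fun k l => h l k) - PN h N) - (sumZ2 h - PN h N)) by ring.
    unfold Rminus at 1. eapply Rle_trans. apply Rabs_triang. rewrite Rabs_Ropp.
    replace (16 * C * q ^ S N / ((1 - q) * (1 - q))) with
      (8 * C * q ^ S N / ((1 - q) * (1 - q)) + 8 * C * q ^ S N / ((1 - q) * (1 - q))) by (field; lra).
    lra. }
  assert (K * q ^ S N < D).
  { apply (Rmult_lt_compat_l K) in HN; auto. replace (K * (D / K)) with D in HN by (field; lra). lra. }
  assert (16 * C * q ^ S N / ((1 - q) * (1 - q)) <= K * q ^ S N).
  { unfold K. pose proof (pow_le q (S N) (proj1 Hq)).
    unfold Rdiv. rewrite !Rmult_assoc.
    assert (0 < / ((1 - q) * (1 - q))) by (apply Rinv_0_lt_compat; nra). nra. }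
  lra.
Qed.

Definition Good2 (h : Z -> Z -> R) := exists C d, 0 < d /\ forall k l, Rabs (h k l) <= BZ2 C d k l.

Lemma sumZ2_ext f g : (forall k l, f k l = g k l) -> sumZ2 f = sumZ2 g.
Proof. intros H. unfold sumZ2. apply sumZ_ext. intro k. apply sumZ_ext. auto. Qed.

Lemma BZ2_weaken C d d' k l : 0 <= C -> d' <= d -> BZ2 C d k l <= BZ2 C d' k l.
Proof.
  intros HC Hd. unfold BZ2. apply Rmult_le_compat_l; auto. apply exp_mono.
  pose proof (Rabs_pos (IZR k)); pose proof (Rabs_pos (IZR l)). nra.
Qed.

Lemma Good2_plus f g : Good2 f -> Good2 g -> Good2 (fun k l => f k l + g k l).
Proof.
  intros [C1 [d1 [H1 B1]]] [C2 [d2 [H2 B2]]].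
  exists (C1 + C2), (Rmin d1 d2). split. apply Rmin_glb_lt; auto.
  intros k l. eapply Rle_trans. apply Rabs_triang.
  pose proof (C2nn f C1 d1 B1). pose proof (C2nn g C2 d2 B2).
  pose proof (BZ2_weaken C1 d1 (Rmin d1 d2) k l H (Rmin_l _ _)).
  pose proof (BZ2_weaken C2 d2 (Rmin d1 d2) k l H0 (Rmin_r _ _)).
  specialize (B1 k l). specialize (B2 k l). unfold BZ2 in *. lra.
Qed.

Lemma Good2_scal c f : Good2 f -> Good2 (fun k l => c * f k l).
Proof.
  intros [C [d [H B]]]. exists (Rabs c * C), d. split; auto. intros k l.
  rewrite Rabs_mult. unfold BZ2. rewrite Rmult_assoc. apply Rmult_le_compat_l. apply Rabs_pos. apply B.
Qed.

Lemma Good2_map f (p r : Z -> Z -> Z) (A B : R) : 0 < A ->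
  (forall k l, Rabs (IZR k) + Rabs (IZR l) <= A * (Rabs (IZR (p k l)) + Rabs (IZR (r k l))) + B) ->
  Good2 f -> Good2 (fun k l => f (p k l) (r k l)).
Proof.
  intros HA Hm [C [d [H Bf]]]. exists (C * exp (d * B / A)), (d / A). split.
  apply Rdiv_lt_0_compat; auto.
  intros k l. eapply Rle_trans. apply Bf. pose proof (C2nn f C d Bf).
  unfold BZ2. rewrite Rmult_assoc, <- exp_plus. apply Rmult_le_compat_l; auto. apply exp_mono.
  specialize (Hm k l).
  apply (Rmult_le_compat_l (d / A)) in Hm; [|left; apply Rdiv_lt_0_compat; auto].
  replace (d / A * (A * (Rabs (IZR (p k l)) + Rabs (IZR (r k l))) + B)) with
    (d * (Rabs (IZR (p k l)) + Rabs (IZR (r k l))) + d * B / A) in Hm by (field; lra).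
  lra.
Qed.

Lemma sumZ2_plus f g : Good2 f -> Good2 g ->
  sumZ2 (fun k l => f k l + g k l) = sumZ2 f + sumZ2 g.
Proof.
  intros [C1 [d1 [H1 B1]]] [C2 [d2 [H2 B2]]]. unfold sumZ2.
  rewrite (sumZ_ext _ (fun k => sumZ (f k) + sumZ (g k))).
  apply (sumZ_plus _ _ _ d1 _ d2 H1 H2 (inner_bound f C1 d1 H1 B1) (inner_bound g C2 d2 H2 B2)).
  intro k. apply (sumZ_plus _ _ _ d1 _ d2 H1 H2 (row_bound f C1 d1 B1 k) (row_bound g C2 d2 B2 k)).
Qed.

Lemma sumZ2_scal c f : sumZ2 (fun k l => c * f k l) = c * sumZ2 f.
Proof.
  unfold sumZ2. rewrite <- sumZ_scal. apply sumZ_ext. intro k. apply sumZ_scal.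
Qed.

Lemma sumZ2_swapG f : Good2 f -> sumZ2 (fun k l => f l k) = sumZ2 f.
Proof. intros [C [d [H B]]]. apply (sumZ2_swap f C d H B). Qed.

Lemma sumZ2_inner_refl f (c : Z -> Z) : Good2 f -> sumZ2 (fun k l => f k (c k - l)%Z) = sumZ2 f.
Proof.
  intros [C [d [H B]]]. unfold sumZ2. apply sumZ_ext. intro k.
  apply (sumZ_refl (f k) _ d (c k) H (row_bound f C d B k)).
Qed.

Lemma sumZ2_inner_shift f (c : Z -> Z) : Good2 f -> sumZ2 (fun k l => f k (l + c k)%Z) = sumZ2 f.
Proof.
  intros [C [d [H B]]]. unfold sumZ2. apply sumZ_ext. intro k.
  apply (sumZ_shift (f k) _ d (c k) H (row_bound f C d B k)).
Qed.

Lemma sumZ2_outer_neg f : Good2 f -> sumZ2 (fun k l => f (- k)%Z l) = sumZ2 f.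
Proof.
  intros [C [d [H B]]]. unfold sumZ2.
  apply (sumZ_neg (fun k => sumZ (f k)) _ d H (inner_bound f C d H B)).
Qed.

Lemma mvt_bound (g g' : R -> R) a b M :
  (forall x, Rmin a b <= x <= Rmax a b -> is_derive g x (g' x)) ->
  (forall x, Rmin a b <= x <= Rmax a b -> Rabs (g' x) <= M) ->
  Rabs (g b - g a) <= M * Rabs (b - a).
Proof.
  intros Hd Hb.
  destruct (MVT_gen g a b g') as [c [Hc E]].
  - intros x Hx. apply Hd. lra.
  - intros x Hx. apply continuity_pt_filterlim. apply (ex_derive_continuous g x).
    exists (g' x). apply Hd; auto.
  - rewrite E, Rabs_mult. apply Rmult_le_compat_r. apply Rabs_pos. apply Hb; auto.
Qed.

Lemma is_derive_shift (g : R -> R) (l u0 x : R) : is_derive g (u0 + x) l -> is_derive (fun s => g (u0 + s)) x l.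
Proof.
  intros H. assert (Hs : is_derive (fun s => u0 + s) x 1) by (auto_derive; auto; ring).
  pose proof (is_derive_comp _ _ _ _ _ H Hs) as H0. unfold scal in H0; simpl in H0; unfold mult in H0; simpl in H0; rewrite Rmult_1_l in H0. exact H0.
Qed.

Lemma taylor2 (g g1 g2 : R -> R) u0 r M h :
  (forall u, Rabs (u - u0) <= r -> is_derive g u (g1 u)) ->
  (forall u, Rabs (u - u0) <= r -> is_derive g1 u (g2 u)) ->
  (forall u, Rabs (u - u0) <= r -> Rabs (g2 u) <= M) ->
  Rabs h <= r ->
  Rabs (g (u0 + h) - g u0 - h * g1 u0) <= M * (h * h).
Proof.
  intros D1 D2 B Hh.
  assert (Hin : forall x, Rmin 0 h <= x <= Rmax 0 h -> Rabs (u0 + x - u0) <= r /\ Rabs x <= Rabs h).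
  { intros x Hx. replace (u0 + x - u0) with x by ring.
    unfold Rmin, Rmax in Hx. destruct (Rle_dec 0 h); unfold Rabs in *;
    repeat destruct Rcase_abs; lra. }
  pose (phi := fun s => g (u0 + s) - s * g1 u0).
  assert (E : g (u0 + h) - g u0 - h * g1 u0 = phi h - phi 0).
  { unfold phi. rewrite Rplus_0_r. ring. }
  rewrite E.
  assert (M0 : 0 <= M). { pose proof (B u0 ltac:(rewrite Rminus_diag_eq, Rabs_R0; auto; pose proof (Rabs_pos h); lra)).
    pose proof (Rabs_pos (g2 u0)). lra. }
  replace (M * (h * h)) with ((M * Rabs h) * Rabs (h - 0)).
  2: { rewrite Rminus_0_r. rewrite Rmult_assoc, <- Rabs_mult. rewrite Rabs_pos_eq; [ring|]. nra. }
  apply (mvt_bound phi (fun s => g1 (u0 + s) - g1 u0)).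
  - intros x Hx. destruct (Hin x Hx) as [Hr _]. unfold phi.
    apply (is_derive_minus (fun s => g (u0 + s)) (fun s => s * g1 u0)).
    + apply is_derive_shift. apply D1. auto.
    + auto_derive; auto; ring.
  - intros x Hx. destruct (Hin x Hx) as [Hr Hxh].
    replace (g1 (u0 + x) - g1 u0) with (g1 (u0 + x) - g1 (u0 + 0)) by (rewrite Rplus_0_r; auto).
    eapply Rle_trans.
    apply (mvt_bound (fun s => g1 (u0 + s)) (fun s => g2 (u0 + s)) 0 x M).
    + intros y Hy. apply is_derive_shift.
      apply D2. replace (u0 + y - u0) with y by ring.
      unfold Rmin, Rmax in Hy, Hx. destruct (Rle_dec 0 x), (Rle_dec 0 h); unfold Rabs in *;
      repeat destruct Rcase_abs; lra.
    + intros y Hy. apply B. replace (u0 + y - u0) with y by ring.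
      unfold Rmin, Rmax in Hy, Hx. destruct (Rle_dec 0 x), (Rle_dec 0 h); unfold Rabs in *;
      repeat destruct Rcase_abs; lra.
    + rewrite Rminus_0_r. apply Rmult_le_compat_l; auto.
Qed.

Lemma sumZ2_minus f g : Good2 f -> Good2 g ->
  sumZ2 (fun k l => f k l - g k l) = sumZ2 f - sumZ2 g.
Proof.
  intros Hf Hg. rewrite (sumZ2_ext _ (fun k l => f k l + (-1) * g k l)) by (intros; ring).
  rewrite sumZ2_plus; auto. rewrite sumZ2_scal. ring. apply Good2_scal; auto.
Qed.

Lemma Good2_minus f g : Good2 f -> Good2 g -> Good2 (fun k l => f k l - g k l).
Proof.
  intros Hf Hg. destruct (Good2_plus _ _ Hf (Good2_scal (-1) _ Hg)) as [C [d [H B]]].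
  exists C, d; split; auto. intros k l. specialize (B k l). simpl in B.
  replace (f k l - g k l) with (f k l + -1 * g k l) by ring. auto.
Qed.

Lemma Good2_of f C d : 0 < d -> (forall k l, Rabs (f k l) <= BZ2 C d k l) -> Good2 f.
Proof. intros; exists C, d; auto. Qed.

Lemma derive_sumZ2 (f f1 f2 : R -> Z -> Z -> R) u0 r C d :
  0 < r -> 0 < d ->
  (forall u k l, Rabs (u - u0) <= r -> is_derive (fun v => f v k l) u (f1 u k l)) ->
  (forall u k l, Rabs (u - u0) <= r -> is_derive (fun v => f1 v k l) u (f2 u k l)) ->
  (forall u k l, Rabs (u - u0) <= r ->
     Rabs (f u k l) <= BZ2 C d k l /\ Rabs (f1 u k l) <= BZ2 C d k l /\ Rabs (f2 u k l) <= BZ2 C d k l) ->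
  is_derive (fun u => sumZ2 (f u)) u0 (sumZ2 (f1 u0)).
Proof.
  intros Hr Hd D1 D2 B.
  assert (G0 : forall u, Rabs (u - u0) <= r -> Good2 (f u) /\ Good2 (f1 u)).
  { intros u Hu. split; apply (Good2_of _ C d Hd); intros; apply B; auto. }
  assert (Hu0 : Rabs (u0 - u0) <= r) by (rewrite Rminus_diag_eq, Rabs_R0; auto; lra).
  assert (HC : 0 <= C).
  { destruct (B u0 0%Z 0%Z Hu0) as [H _]. unfold BZ2 in H. pose proof (Rabs_pos (f u0 0%Z 0%Z)).
    pose proof (exp_pos (- d * (Rabs (IZR 0) + Rabs (IZR 0)))). nra. }
  set (q := exp (- d)). pose proof (q_range d Hd) as Hq. fold q in Hq.
  set (K := 2 * (2 * C / (1 - q)) / (1 - q)).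
  assert (HK : 0 <= K). { unfold K. apply Rmult_le_pos. apply Rmult_le_pos. lra. apply Rmult_le_pos. lra.
    left; apply Rinv_0_lt_compat; lra. left; apply Rinv_0_lt_compat; lra. }
  assert (Key : forall h, Rabs h <= r ->
    Rabs (sumZ2 (f (u0 + h)) - sumZ2 (f u0) - h * sumZ2 (f1 u0)) <= K * (h * h)).
  { intros h Hh.
    assert (Hh' : Rabs (u0 + h - u0) <= r) by (replace (u0 + h - u0) with h by ring; auto).
    destruct (G0 _ Hh') as [Ga _]. destruct (G0 _ Hu0) as [Gb Gc].
    assert (E : sumZ2 (fun k l => f (u0 + h) k l - f u0 k l - h * f1 u0 k l) =
      sumZ2 (f (u0 + h)) - sumZ2 (f u0) - h * sumZ2 (f1 u0)).
    { rewrite sumZ2_minus. rewrite sumZ2_minus; auto. rewrite sumZ2_scal. auto.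
      apply Good2_minus; auto. apply Good2_scal; auto. }
    rewrite <- E.
    assert (Bt : forall k l, Rabs (f (u0 + h) k l - f u0 k l - h * f1 u0 k l) <= BZ2 (C * (h * h)) d k l).
    { intros k l. eapply Rle_trans.
      apply (taylor2 (fun v => f v k l) (fun v => f1 v k l) (fun v => f2 v k l) u0 r (BZ2 C d k l) h).
      intros; apply D1; auto. intros; apply D2; auto. intros; apply B; auto. auto.
      unfold BZ2. right; ring. }
    pose proof (sumZ2_bound _ (C * (h * h)) d Hd Bt). fold q in H.
    unfold K. replace (2 * (2 * C / (1 - q)) / (1 - q) * (h * h)) with
      (2 * (2 * (C * (h * h)) / (1 - q)) / (1 - q)) by (field; lra). auto. }
  apply is_derive_Reals. intros eps Heps.
  assert (Hpos : 0 < Rmin r (eps / (K + 1))).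
  { apply Rmin_glb_lt; auto. apply Rdiv_lt_0_compat; lra. }
  exists (mkposreal _ Hpos). intros h Hh0 Hh. simpl in Hh.
  assert (Hhr : Rabs h <= r) by (pose proof (Rmin_l r (eps / (K + 1))); lra).
  assert (Hhe : Rabs h < eps / (K + 1)) by (pose proof (Rmin_r r (eps / (K + 1))); lra).
  specialize (Key h Hhr).
  replace ((sumZ2 (f (u0 + h)) - sumZ2 (f u0)) / h - sumZ2 (f1 u0)) with
    ((sumZ2 (f (u0 + h)) - sumZ2 (f u0) - h * sumZ2 (f1 u0)) / h) by (field; auto).
  unfold Rdiv. rewrite Rabs_mult, Rabs_inv.
  assert (0 < Rabs h) by (apply Rabs_pos_lt; auto).
  apply (Rmult_le_compat_r (/ Rabs h)) in Key; [|left; apply Rinv_0_lt_compat; auto].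
  eapply Rle_lt_trans. apply Key.
  replace (K * (h * h) * / Rabs h) with (K * Rabs h).
  2: { replace (h * h) with (Rabs h * Rabs h). field. lra.
       rewrite <- Rabs_mult. apply Rabs_pos_eq. nra. }
  apply (Rmult_lt_compat_l (K + 1)) in Hhe; [|lra].
  replace ((K + 1) * (eps / (K + 1))) with eps in Hhe by (field; lra).
  nra.
Qed.

Definition QF (c : nat -> R -> R) (K L u : R) : R :=
  c 0%nat u * K ^ 2 + c 1%nat u * K * L + c 2%nat u * L ^ 2 + c 3%nat u * K + c 4%nat u * L + c 5%nat u.

Lemma QF_derive c c1 K L u :
  (forall i, is_derive (c i) u (c1 i u)) -> is_derive (fun v => QF c K L v) u (QF c1 K L u).
Proof.
  intros H. unfold QF.
  assert (E : forall i, Derive (c i) u = c1 i u) by (intro i; apply is_derive_unique, H).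
  auto_derive.
  - repeat split; eexists; apply H.
  - rewrite !E. ring.
Qed.

Section Term.
Variables (cP cP1 cP2 cp cp1 cp2 : nat -> R -> R) (psi psi1 psi2 : R -> R) (K L : R).

Definition term u := exp (- QF cP K L u) * psi (QF cp K L u).
Definition term1 u := exp (- QF cP K L u) *
  (- QF cP1 K L u * psi (QF cp K L u) + psi1 (QF cp K L u) * QF cp1 K L u).
Definition term2 u := exp (- QF cP K L u) *
  (- QF cP1 K L u * (- QF cP1 K L u * psi (QF cp K L u) + psi1 (QF cp K L u) * QF cp1 K L u)
   + (- QF cP2 K L u * psi (QF cp K L u) - QF cP1 K L u * psi1 (QF cp K L u) * QF cp1 K L u
      + psi2 (QF cp K L u) * QF cp1 K L u ^ 2 + psi1 (QF cp K L u) * QF cp2 K L u)).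

Hypothesis Hpsi : forall x, is_derive psi x (psi1 x).
Hypothesis Hpsi1 : forall x, is_derive psi1 x (psi2 x).

Lemma term_derive u :
  (forall i, is_derive (cP i) u (cP1 i u)) -> (forall i, is_derive (cp i) u (cp1 i u)) ->
  is_derive term u (term1 u).
Proof.
  intros H1 H2. unfold term, term1.
  pose proof (QF_derive cP cP1 K L u H1) as D1. pose proof (QF_derive cp cp1 K L u H2) as D2.
  assert (E1 : Derive (fun x : R => QF cP K L x) u = QF cP1 K L u) by (apply is_derive_unique; exact D1). assert (E2 : Derive (fun x : R => QF cp K L x) u = QF cp1 K L u) by (apply is_derive_unique; exact D2).
  assert (E3 : forall x, Derive (fun y : R => psi y) x = psi1 x) by (intro; apply is_derive_unique, Hpsi).
  auto_derive.
  - repeat split; try (eexists; eauto). 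
  - rewrite E1, E2, E3. ring.
Qed.

Lemma term1_derive u :
  (forall i, is_derive (cP i) u (cP1 i u)) -> (forall i, is_derive (cp i) u (cp1 i u)) ->
  (forall i, is_derive (cP1 i) u (cP2 i u)) -> (forall i, is_derive (cp1 i) u (cp2 i u)) ->
  is_derive term1 u (term2 u).
Proof.
  intros H1 H2 H3 H4. unfold term1, term2.
  pose proof (QF_derive cP cP1 K L u H1) as D1. pose proof (QF_derive cp cp1 K L u H2) as D2.
  pose proof (QF_derive cP1 cP2 K L u H3) as D3. pose proof (QF_derive cp1 cp2 K L u H4) as D4.
  assert (E1 : Derive (fun x : R => QF cP K L x) u = QF cP1 K L u) by (apply is_derive_unique; exact D1). assert (E2 : Derive (fun x : R => QF cp K L x) u = QF cp1 K L u) by (apply is_derive_unique; exact D2).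
  assert (E3' : Derive (fun x : R => QF cP1 K L x) u = QF cP2 K L u) by (apply is_derive_unique; exact D3). assert (E4 : Derive (fun x : R => QF cp1 K L x) u = QF cp2 K L u) by (apply is_derive_unique; exact D4).
  assert (E3 : forall x, Derive (fun y : R => psi y) x = psi1 x) by (intro; apply is_derive_unique, Hpsi).
  assert (E5 : forall x, Derive (fun y : R => psi1 y) x = psi2 x) by (intro; apply is_derive_unique, Hpsi1).
  auto_derive.
  - repeat split; try (eexists; eauto).
  - rewrite E1, E2, E3, E3', E4, E5. ring.
Qed.

End Term.

Lemma abs_mul_le a b A B : Rabs a <= A -> Rabs b <= B -> Rabs (a * b) <= A * B.
Proof.
  intros Ha Hb. rewrite Rabs_mult. pose proof (Rabs_pos a). pose proof (Rabs_pos b).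
  apply Rmult_le_compat; auto.
Qed.

Lemma abs6 a b c d e f : Rabs (a + b + c + d + e + f) <=
  Rabs a + Rabs b + Rabs c + Rabs d + Rabs e + Rabs f.
Proof.
  pose proof (Rabs_triang (a + b + c + d + e) f). pose proof (Rabs_triang (a + b + c + d) e).
  pose proof (Rabs_triang (a + b + c) d). pose proof (Rabs_triang (a + b) c).
  pose proof (Rabs_triang a b). lra.
Qed.

Lemma QF_abs_bound c K L u M : (forall i, Rabs (c i u) <= M) ->
  Rabs (QF c K L u) <= 4 * M * (1 + K ^ 2 + L ^ 2).
Proof.
  intros H. unfold QF.
  pose proof (H 0%nat); pose proof (H 1%nat); pose proof (H 2%nat);
  pose proof (H 3%nat); pose proof (H 4%nat); pose proof (H 5%nat).
  assert (HM : 0 <= M) by (pose proof (Rabs_pos (c 0%nat u)); lra).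
  assert (aK : Rabs K <= 1 + K ^ 2) by (unfold Rabs; destruct Rcase_abs; nra).
  assert (aL : Rabs L <= 1 + L ^ 2) by (unfold Rabs; destruct Rcase_abs; nra).
  assert (aKL : Rabs (K * L) <= K ^ 2 + L ^ 2) by (rewrite Rabs_mult; unfold Rabs; repeat destruct Rcase_abs; nra).
  assert (K2 : Rabs (K ^ 2) = K ^ 2) by (apply Rabs_pos_eq; nra).
  assert (L2 : Rabs (L ^ 2) = L ^ 2) by (apply Rabs_pos_eq; nra).
  pose proof (abs_mul_le _ _ _ _ H0 (Req_le _ _ K2)).
  pose proof (abs_mul_le _ _ _ _ H1 aKL). rewrite <- Rmult_assoc in H7.
  pose proof (abs_mul_le _ _ _ _ H2 (Req_le _ _ L2)).
  pose proof (abs_mul_le _ _ _ _ H3 aK).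
  pose proof (abs_mul_le _ _ _ _ H4 aL).
  eapply Rle_trans. apply abs6.
  assert (0 <= K ^ 2) by nra. assert (0 <= L ^ 2) by nra.
  assert (E : 4 * M * (1 + K ^ 2 + L ^ 2) = 4 * M + 4 * (M * K ^ 2) + 4 * (M * L ^ 2)) by ring.
  rewrite E. rewrite Rmult_plus_distr_l in H7, H9, H10. rewrite Rmult_1_r in H9, H10.
  assert (0 <= M * K ^ 2) by nra. assert (0 <= M * L ^ 2) by nra.
  lra.
Qed.

Lemma QF_lower c K L u M g : 0 < g -> (forall i, Rabs (c i u) <= M) ->
  c 0%nat u - Rabs (c 1%nat u) / 2 >= 2 * g -> c 2%nat u - Rabs (c 1%nat u) / 2 >= 2 * g ->
  QF c K L u >= g * (K ^ 2 + L ^ 2) - (M * M / (2 * g) + M).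
Proof.
  intros Hg H H0 H2. unfold QF.
  pose proof (H 1%nat); pose proof (H 3%nat); pose proof (H 4%nat); pose proof (H 5%nat).
  assert (B1 : c 1%nat u * K * L >= - (Rabs (c 1%nat u) / 2) * (K ^ 2 + L ^ 2)).
  { assert (X : Rabs (c 1%nat u * K * L) <= Rabs (c 1%nat u) * ((K ^ 2 + L ^ 2) / 2)).
    { rewrite Rmult_assoc, Rabs_mult. apply Rmult_le_compat_l. apply Rabs_pos.
      rewrite Rabs_mult; pose proof (pow2_ge_0 (K - L)); pose proof (pow2_ge_0 (K + L)); unfold Rabs; repeat destruct Rcase_abs; nra. }
    pose proof (Rle_abs (- (c 1%nat u * K * L))) as Y. rewrite Rabs_Ropp in Y. lra. }
  assert (B3 : forall (a X : R), Rabs a <= M -> a * X >= - g * X ^ 2 - M * M / (4 * g)).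
  { intros a X Ha. assert (a * a <= M * M) by (unfold Rabs in Ha; destruct Rcase_abs; nra).
    pose proof (pow2_ge_0 (2 * g * X + a)).
    assert (a * X >= - g * X ^ 2 - a * a / (4 * g)).
    { apply Rle_ge. apply (Rmult_le_reg_l (4 * g)). lra.
      replace (4 * g * (- g * X ^ 2 - a * a / (4 * g))) with (- 4 * g * g * X ^ 2 - a * a) by (field; lra).
      nra. }
    assert (a * a / (4 * g) <= M * M / (4 * g)).
    { unfold Rdiv. apply Rmult_le_compat_r; auto. left; apply Rinv_0_lt_compat; lra. }
    lra. }
  pose proof (B3 _ K H3). pose proof (B3 _ L H4).
  assert (c 5%nat u >= - M) by (unfold Rabs in H5; destruct Rcase_abs; lra).
  replace (M * M / (2 * g)) with (M * M / (4 * g) + M * M / (4 * g)) by (field; lra).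
  assert (0 <= K ^ 2) by nra. assert (0 <= L ^ 2) by nra.
  nra.
Qed.

Lemma br0 b X : 0 <= X -> Rabs b <= 1 -> Rabs b <= (1 + 2 * X) ^ 2.
Proof. intros. nra. Qed.

Lemma br1 a b c d X : Rabs a <= X -> Rabs b <= 1 -> Rabs c <= 1 -> Rabs d <= X ->
  Rabs (- a * b + c * d) <= (1 + 2 * X) ^ 2.
Proof.
  intros Ha Hb Hc Hd. assert (0 <= X) by (pose proof (Rabs_pos a); lra).
  eapply Rle_trans. apply Rabs_triang.
  pose proof (abs_mul_le _ _ _ _ Ha Hb). pose proof (abs_mul_le _ _ _ _ Hc Hd).
  replace (- a * b) with (- (a * b)) by ring. rewrite Rabs_Ropp. nra.
Qed.

Lemma br2 a b c d e f g X : Rabs a <= X -> Rabs b <= 1 -> Rabs c <= 1 -> Rabs d <= X ->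
  Rabs e <= X -> Rabs f <= 1 -> Rabs g <= X ->
  Rabs (- a * (- a * b + c * d) + (- e * b - a * c * d + f * d ^ 2 + c * g)) <= (1 + 2 * X) ^ 2.
Proof.
  intros Ha Hb Hc Hd He Hf Hg. assert (0 <= X) by (pose proof (Rabs_pos a); lra).
  assert (T1 : Rabs (- a * (- a * b + c * d)) <= X * (2 * X)).
  { apply abs_mul_le. rewrite Rabs_Ropp; auto.
    eapply Rle_trans. apply Rabs_triang.
    pose proof (abs_mul_le _ _ _ _ Ha Hb). pose proof (abs_mul_le _ _ _ _ Hc Hd).
    replace (- a * b) with (- (a * b)) by ring. rewrite Rabs_Ropp. lra. }
  assert (T2 : Rabs (- e * b) <= X * 1) by (apply abs_mul_le; auto; rewrite Rabs_Ropp; auto).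
  assert (T3 : Rabs (a * c * d) <= X * 1 * X) by (apply abs_mul_le; auto; apply abs_mul_le; auto).
  assert (T4 : Rabs (f * d ^ 2) <= 1 * (X * X)).
  { apply abs_mul_le; auto. simpl. rewrite Rmult_1_r. apply abs_mul_le; auto. }
  assert (T5 : Rabs (c * g) <= 1 * X) by (apply abs_mul_le; auto).
  pose proof (Rabs_triang (- a * (- a * b + c * d)) (- e * b - a * c * d + f * d ^ 2 + c * g)).
  pose proof (Rabs_triang (- e * b - a * c * d + f * d ^ 2) (c * g)).
  pose proof (Rabs_triang (- e * b - a * c * d) (f * d ^ 2)).
  pose proof (Rabs_triang (- e * b) (- (a * c * d))). rewrite Rabs_Ropp in H3.
  replace (- e * b + - (a * c * d)) with (- e * b - a * c * d) in H3 by ring.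
  nra.
Qed.

Lemma exp_ge1 t : 0 <= t -> 1 + t <= exp t.
Proof.
  intros [H|H]. left; apply exp_ineq1; lra. rewrite <- H, exp_0; lra.
Qed.

Lemma IZR_abs_le_sq k : Rabs (IZR k) <= IZR k ^ 2.
Proof.
  rewrite <- abs_IZR. simpl. rewrite Rmult_1_r, <- mult_IZR. apply IZR_le. nia.
Qed.

Definition Cst (M g : R) := exp (M * M / (2 * g) + M) * (1 + 8 * M) ^ 2 / (Rmin 1 (g / 4)) ^ 2.

Lemma final_chain k l M g c0 A E :
  0 < g -> 0 <= M -> c0 = M * M / (2 * g) + M ->
  0 <= A -> A <= exp c0 * exp (- g * (IZR k ^ 2 + IZR l ^ 2)) ->
  Rabs E <= (1 + 2 * (4 * M * (1 + IZR k ^ 2 + IZR l ^ 2))) ^ 2 ->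
  Rabs (A * E) <= BZ2 (Cst M g) (g / 2) k l.
Proof.
  intros Hg HM Hc HA HA2 HE. set (K := IZR k) in *. set (L := IZR l) in *.
  set (s := K ^ 2 + L ^ 2).
  assert (Hs : 0 <= s) by (unfold s; nra).
  assert (Hsk : Rabs K + Rabs L <= s) by (unfold s, K, L; pose proof (IZR_abs_le_sq k); pose proof (IZR_abs_le_sq l); lra).
  set (m := Rmin 1 (g / 4)).
  assert (Hm : 0 < m) by (apply Rmin_glb_lt; lra).
  assert (Hm1 : m <= 1) by apply Rmin_l. assert (Hm2 : m <= g / 4) by apply Rmin_r.
  assert (E1 : (1 + 2 * (4 * M * (1 + s))) <= (1 + 8 * M) * (1 + s)) by nra.
  assert (E1' : (1 + 2 * (4 * M * (1 + K ^ 2 + L ^ 2))) ^ 2 <= ((1 + 8 * M) * (1 + s)) ^ 2).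
  { replace (1 + K ^ 2 + L ^ 2) with (1 + s) by (unfold s; ring). apply pow_incr. nra. }
  assert (E2 : m * (1 + s) <= exp (g * s / 4)).
  { eapply Rle_trans; [|apply exp_ge1; nra]. nra. }
  assert (E3 : (m * (1 + s)) ^ 2 <= exp (g * s / 2)).
  { replace (g * s / 2) with (g * s / 4 + g * s / 4) by field. rewrite exp_plus.
    simpl. rewrite Rmult_1_r. apply Rmult_le_compat; nra. }
  rewrite Rabs_mult, (Rabs_pos_eq A HA).
  eapply Rle_trans. apply Rmult_le_compat. auto. apply Rabs_pos. apply HA2. eapply Rle_trans. apply HE. apply E1'.
  unfold BZ2, Cst. rewrite <- Hc. fold m.
  assert (X1 : exp (- g * s) * exp (g * s / 2) = exp (- (g / 2) * s)).
  { rewrite <- exp_plus. f_equal. field. }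
  assert (X2 : exp (- (g / 2) * s) <= exp (- (g / 2) * (Rabs K + Rabs L))).
  { apply exp_mono. nra. }
  pose proof (exp_pos c0). pose proof (exp_pos (- g * s)).
  assert (0 < m ^ 2) by (apply pow_lt; auto).
  replace (exp c0 * exp (- g * (K ^ 2 + L ^ 2)) * ((1 + 8 * M) * (1 + s)) ^ 2) with
    (exp c0 * (1 + 8 * M) ^ 2 / m ^ 2 * (exp (- g * s) * (m * (1 + s)) ^ 2)) by (unfold s; field; lra).
  apply Rmult_le_compat_l. apply Rmult_le_pos. apply Rmult_le_pos. lra. nra. left; apply Rinv_0_lt_compat; auto.
  eapply Rle_trans. apply Rmult_le_compat_l. lra. apply E3. rewrite X1. auto.
Qed.

Lemma term_bounds (cP cP1 cP2 cp cp1 cp2 : nat -> R -> R) (psi psi1 psi2 : R -> R) k l u M g :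
  0 < g -> (forall x, Rabs (psi x) <= 1) -> (forall x, Rabs (psi1 x) <= 1) -> (forall x, Rabs (psi2 x) <= 1) ->
  (forall i, Rabs (cP i u) <= M) -> (forall i, Rabs (cP1 i u) <= M) -> (forall i, Rabs (cP2 i u) <= M) ->
  (forall i, Rabs (cp1 i u) <= M) -> (forall i, Rabs (cp2 i u) <= M) ->
  cP 0%nat u - Rabs (cP 1%nat u) / 2 >= 2 * g -> cP 2%nat u - Rabs (cP 1%nat u) / 2 >= 2 * g ->
  Rabs (term cP cp psi (IZR k) (IZR l) u) <= BZ2 (Cst M g) (g / 2) k l /\
  Rabs (term1 cP cP1 cp cp1 psi psi1 (IZR k) (IZR l) u) <= BZ2 (Cst M g) (g / 2) k l /\
  Rabs (term2 cP cP1 cP2 cp cp1 cp2 psi psi1 psi2 (IZR k) (IZR l) u) <= BZ2 (Cst M g) (g / 2) k l.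
Proof.
  intros Hg P0 P1 P2 B0 B1 B2 b1 b2 L0 L2.
  assert (HM : 0 <= M) by (pose proof (Rabs_pos (cP 0%nat u)); specialize (B0 0%nat); lra).
  set (K := IZR k). set (L := IZR l).
  pose proof (QF_lower cP K L u M g Hg B0 L0 L2) as Hlow.
  set (A := exp (- QF cP K L u)).
  assert (HA : 0 <= A) by (left; apply exp_pos).
  assert (HA2 : A <= exp (M * M / (2 * g) + M) * exp (- g * (K ^ 2 + L ^ 2))).
  { unfold A. rewrite <- exp_plus. apply exp_mono. lra. }
  set (X := 4 * M * (1 + K ^ 2 + L ^ 2)).
  assert (HX : 0 <= X) by (unfold X; nra).
  pose proof (QF_abs_bound cP1 K L u M B1) as Q1.
  pose proof (QF_abs_bound cP2 K L u M B2) as Q2.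
  pose proof (QF_abs_bound cp1 K L u M b1) as q1.
  pose proof (QF_abs_bound cp2 K L u M b2) as q2.
  fold X in Q1, Q2, q1, q2.
  split; [|split].
  - unfold term. fold A. apply (final_chain k l M g (M * M / (2 * g) + M) A); auto. apply br0; auto.
  - unfold term1. fold A. apply (final_chain k l M g (M * M / (2 * g) + M) A); auto. apply br1; auto.
  - unfold term2. fold A. apply (final_chain k l M g (M * M / (2 * g) + M) A); auto. apply br2; auto.
Qed.

Lemma cont_eps (f : R -> R) u0 : continuous f u0 ->
  forall eps, 0 < eps -> exists r, 0 < r /\ forall u, Rabs (u - u0) <= r -> Rabs (f u - f u0) <= eps.
Proof.
  intros H eps Heps.
  apply continuity_pt_filterlim in H.
  destruct (H eps Heps) as [d [Hd Hf]].
  exists (d / 2). split. lra. intros u Hu.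
  destruct (Req_dec u u0) as [E|NE].
  - subst. rewrite Rminus_diag_eq, Rabs_R0; auto; lra.
  - left. apply Hf. split. split. exact I. intro E; apply NE; auto. simpl. unfold R_dist. lra.
Qed.

Lemma fam_eps (F : nat -> R -> R) u0 n :
  (forall i, (i < n)%nat -> continuous (F i) u0) -> (forall i, (n <= i)%nat -> forall u, F i u = 0) ->
  forall eps, 0 < eps -> exists r, 0 < r /\ forall u, Rabs (u - u0) <= r -> forall i, Rabs (F i u - F i u0) <= eps.
Proof.
  intros Hc Hz eps Heps.
  assert (Hm : forall m, (m <= n)%nat -> exists r, 0 < r /\ forall u, Rabs (u - u0) <= r -> forall i, (i < m)%nat -> Rabs (F i u - F i u0) <= eps).
  { induction m as [|m IH]; intros Hmn.
    - exists 1. split. lra. intros; lia.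
    - destruct (IH ltac:(lia)) as [r1 [Hr1 H1]].
      destruct (cont_eps (F m) u0 (Hc m ltac:(lia)) eps Heps) as [r2 [Hr2 H2]].
      exists (Rmin r1 r2). split. apply Rmin_glb_lt; auto.
      intros u Hu i Hi. destruct (Nat.eq_dec i m) as [->|NE].
      + apply H2. pose proof (Rmin_r r1 r2). lra.
      + apply H1. pose proof (Rmin_l r1 r2). lra. lia. }
  destruct (Hm n (le_n n)) as [r [Hr H]]. exists r. split; auto. intros u Hu i.
  destruct (Nat.lt_ge_cases i n). apply H; auto.
  rewrite !(Hz i H0). rewrite Rminus_0_r, Rabs_R0. lra.
Qed.

Lemma fam_bound (F : nat -> R -> R) u0 n :
  (forall i, (n <= i)%nat -> forall u, F i u = 0) -> exists B, forall i, Rabs (F i u0) <= B.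
Proof.
  intros Hz.
  assert (Hm : forall m, exists B, forall i, (i < m)%nat -> Rabs (F i u0) <= B).
  { induction m as [|m [B IH]]. exists 0. intros; lia.
    exists (Rmax B (Rabs (F m u0))). intros i Hi. destruct (Nat.eq_dec i m) as [->|NE].
    apply Rmax_r. eapply Rle_trans. apply IH. lia. apply Rmax_l. }
  destruct (Hm n) as [B HB]. exists (Rmax B 0). intros i.
  destruct (Nat.lt_ge_cases i n). eapply Rle_trans. apply HB; auto. apply Rmax_l.
  rewrite (Hz i H). rewrite Rabs_R0. apply Rmax_r.
Qed.

Lemma fam_local (F : nat -> R -> R) u0 n :
  (forall i, (i < n)%nat -> continuous (F i) u0) -> (forall i, (n <= i)%nat -> forall u, F i u = 0) ->
  forall eps, 0 < eps -> exists r M, 0 < r /\ forall u, Rabs (u - u0) <= r -> forall i,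
    Rabs (F i u - F i u0) <= eps /\ Rabs (F i u) <= M.
Proof.
  intros Hc Hz eps Heps. destruct (fam_eps F u0 n Hc Hz eps Heps) as [r [Hr H]].
  destruct (fam_bound F u0 n Hz) as [B HB].
  exists r, (B + eps). split; auto. intros u Hu i. split. apply H; auto.
  pose proof (H u Hu i). pose proof (HB i).
  pose proof (Rabs_triang (F i u - F i u0) (F i u0)). replace (F i u - F i u0 + F i u0) with (F i u) in H2 by ring.
  lra.
Qed.

Lemma master (cP cP1 cP2 cp cp1 cp2 : nat -> R -> R) (psi psi1 psi2 : R -> R) u0 r0 :
  0 < r0 ->
  (forall x, is_derive psi x (psi1 x)) -> (forall x, is_derive psi1 x (psi2 x)) ->
  (forall x, Rabs (psi x) <= 1) -> (forall x, Rabs (psi1 x) <= 1) -> (forall x, Rabs (psi2 x) <= 1) ->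
  (forall u, Rabs (u - u0) <= r0 -> forall i,
     is_derive (cP i) u (cP1 i u) /\ is_derive (cP1 i) u (cP2 i u) /\
     is_derive (cp i) u (cp1 i u) /\ is_derive (cp1 i) u (cp2 i u)) ->
  (forall i, ex_derive (cP2 i) u0 /\ ex_derive (cp2 i) u0) ->
  (forall i, (6 <= i)%nat -> forall u, cP i u = 0 /\ cP1 i u = 0 /\ cP2 i u = 0 /\ cp1 i u = 0 /\ cp2 i u = 0) ->
  cP 0%nat u0 - Rabs (cP 1%nat u0) / 2 > 0 -> cP 2%nat u0 - Rabs (cP 1%nat u0) / 2 > 0 ->
  is_derive (fun u => sumZ2 (fun k l => term cP cp psi (IZR k) (IZR l) u)) u0
    (sumZ2 (fun k l => term1 cP cP1 cp cp1 psi psi1 (IZR k) (IZR l) u0)).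
Proof.
  intros Hr0 Hp Hp1 Bp Bp1 Bp2 HD HE HZ Pos0 Pos2.
  assert (Hu0 : Rabs (u0 - u0) <= r0) by (rewrite Rminus_diag_eq, Rabs_R0; auto; lra).
  set (p := Rmin (cP 0%nat u0 - Rabs (cP 1%nat u0) / 2) (cP 2%nat u0 - Rabs (cP 1%nat u0) / 2)).
  assert (Hp0 : 0 < p) by (apply Rmin_glb_lt; lra).
  pose proof (Rmin_l (cP 0%nat u0 - Rabs (cP 1%nat u0) / 2) (cP 2%nat u0 - Rabs (cP 1%nat u0) / 2)).
  pose proof (Rmin_r (cP 0%nat u0 - Rabs (cP 1%nat u0) / 2) (cP 2%nat u0 - Rabs (cP 1%nat u0) / 2)).
  fold p in H, H0.
  assert (He : 0 < p / 4) by lra.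
  assert (C1 : forall i, continuous (cP i) u0).
  { intro i. exact (ex_derive_continuous (V := R_NormedModule) _ u0 (ex_intro _ _ (proj1 (HD u0 Hu0 i)))). }
  assert (C2 : forall i, continuous (cP1 i) u0).
  { intro i. exact (ex_derive_continuous (V := R_NormedModule) _ u0 (ex_intro _ _ (proj1 (proj2 (HD u0 Hu0 i))))). }
  assert (C3 : forall i, continuous (cP2 i) u0).
  { intro i. exact (ex_derive_continuous (V := R_NormedModule) _ u0 (proj1 (HE i))). }
  assert (C4 : forall i, continuous (cp1 i) u0).
  { intro i. exact (ex_derive_continuous (V := R_NormedModule) _ u0 (ex_intro _ _ (proj2 (proj2 (proj2 (HD u0 Hu0 i)))))). }
  assert (C5 : forall i, continuous (cp2 i) u0).
  { intro i. exact (ex_derive_continuous (V := R_NormedModule) _ u0 (proj2 (HE i))). }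
  destruct (fam_local cP u0 6 (fun i _ => C1 i) (fun i H u => proj1 (HZ i H u)) _ He) as [r1 [M1 [Hr1 F1]]].
  destruct (fam_local cP1 u0 6 (fun i _ => C2 i) (fun i H u => proj1 (proj2 (HZ i H u))) _ He) as [r2 [M2 [Hr2 F2]]].
  destruct (fam_local cP2 u0 6 (fun i _ => C3 i) (fun i H u => proj1 (proj2 (proj2 (HZ i H u)))) _ He) as [r3 [M3 [Hr3 F3]]].
  destruct (fam_local cp1 u0 6 (fun i _ => C4 i) (fun i H u => proj1 (proj2 (proj2 (proj2 (HZ i H u))))) _ He) as [r4 [M4 [Hr4 F4]]].
  destruct (fam_local cp2 u0 6 (fun i _ => C5 i) (fun i H u => proj2 (proj2 (proj2 (proj2 (HZ i H u))))) _ He) as [r5 [M5 [Hr5 F5]]].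
  set (r := Rmin r0 (Rmin r1 (Rmin r2 (Rmin r3 (Rmin r4 r5))))).
  assert (Hr : 0 < r) by (repeat apply Rmin_glb_lt; auto).
  assert (Hrs : forall u, Rabs (u - u0) <= r ->
    Rabs (u - u0) <= r0 /\ Rabs (u - u0) <= r1 /\ Rabs (u - u0) <= r2 /\ Rabs (u - u0) <= r3 /\
    Rabs (u - u0) <= r4 /\ Rabs (u - u0) <= r5).
  { intros u Hu.
    pose proof (Rmin_l r0 (Rmin r1 (Rmin r2 (Rmin r3 (Rmin r4 r5))))).
    pose proof (Rmin_r r0 (Rmin r1 (Rmin r2 (Rmin r3 (Rmin r4 r5))))).
    pose proof (Rmin_l r1 (Rmin r2 (Rmin r3 (Rmin r4 r5)))).
    pose proof (Rmin_r r1 (Rmin r2 (Rmin r3 (Rmin r4 r5)))).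
    pose proof (Rmin_l r2 (Rmin r3 (Rmin r4 r5))).
    pose proof (Rmin_r r2 (Rmin r3 (Rmin r4 r5))).
    pose proof (Rmin_l r3 (Rmin r4 r5)). pose proof (Rmin_r r3 (Rmin r4 r5)).
    pose proof (Rmin_l r4 r5). pose proof (Rmin_r r4 r5).
    unfold r in Hu. repeat split; lra. }
  set (M := Rmax M1 (Rmax M2 (Rmax M3 (Rmax M4 M5)))).
  assert (HM : M1 <= M /\ M2 <= M /\ M3 <= M /\ M4 <= M /\ M5 <= M).
  { pose proof (Rmax_l M1 (Rmax M2 (Rmax M3 (Rmax M4 M5)))).
    pose proof (Rmax_r M1 (Rmax M2 (Rmax M3 (Rmax M4 M5)))).
    pose proof (Rmax_l M2 (Rmax M3 (Rmax M4 M5))). pose proof (Rmax_r M2 (Rmax M3 (Rmax M4 M5))).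
    pose proof (Rmax_l M3 (Rmax M4 M5)). pose proof (Rmax_r M3 (Rmax M4 M5)).
    pose proof (Rmax_l M4 M5). pose proof (Rmax_r M4 M5). unfold M. repeat split; lra. }
  set (g := p / 4).
  apply (derive_sumZ2 (fun u k l => term cP cp psi (IZR k) (IZR l) u)
                      (fun u k l => term1 cP cP1 cp cp1 psi psi1 (IZR k) (IZR l) u)
                      (fun u k l => term2 cP cP1 cP2 cp cp1 cp2 psi psi1 psi2 (IZR k) (IZR l) u)
                      u0 r (Cst M g) (g / 2)); auto.
  - unfold g; lra.
  - intros u k l Hu. destruct (Hrs u Hu) as [Ha _].
    apply term_derive; auto; intro i; apply (HD u Ha i).
  - intros u k l Hu. destruct (Hrs u Hu) as [Ha _].
    apply term1_derive; auto; intro i; apply (HD u Ha i).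
  - intros u k l Hu. destruct (Hrs u Hu) as [Ha [Hb [Hc [Hd [He' Hf]]]]].
    destruct HM as [m1 [m2 [m3 [m4 m5]]]].
    apply term_bounds; auto.
    all: try (unfold g; lra).
    all: try (intro i; destruct (F1 u Hb i); lra).
    all: try (intro i; destruct (F2 u Hc i); lra).
    all: try (intro i; destruct (F3 u Hd i); lra).
    all: try (intro i; destruct (F4 u He' i); lra).
    all: try (intro i; destruct (F5 u Hf i); lra).
    + destruct (F1 u Hb 0%nat) as [a0 _]. destruct (F1 u Hb 1%nat) as [a1 _].
      pose proof (Rabs_triang_inv (cP 1%nat u) (cP 1%nat u0)) as T1.
      pose proof (Rle_abs (- (cP 0%nat u - cP 0%nat u0))) as T2.
      rewrite Rabs_Ropp in T2. unfold g. lra.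
    + destruct (F1 u Hb 2%nat) as [a0 _]. destruct (F1 u Hb 1%nat) as [a1 _].
      pose proof (Rabs_triang_inv (cP 1%nat u) (cP 1%nat u0)) as T1.
      pose proof (Rle_abs (- (cP 2%nat u - cP 2%nat u0))) as T2.
      rewrite Rabs_Ropp in T2. unfold g. lra.
Qed.

Lemma absZ_tri a b : Rabs (IZR (a + b)) <= Rabs (IZR a) + Rabs (IZR b).
Proof. rewrite plus_IZR. apply Rabs_triang. Qed.
Lemma absZ_opp a : Rabs (IZR (- a)) = Rabs (IZR a).
Proof. rewrite opp_IZR. apply Rabs_Ropp. Qed.

Definition sw (h : Z -> Z -> R) := fun k l => h l k.
Definition rf (h : Z -> Z -> R) := fun k l => h k (- k - l - 1)%Z.
Definition sw' (h : Z -> Z -> R) := fun k l => h (- l)%Z (- k)%Z.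
Definition rf' (h : Z -> Z -> R) := fun k l => h (- k)%Z (k + l)%Z.

Lemma Good2_sw h : Good2 h -> Good2 (sw h).
Proof.
  intros G. apply (Good2_map h (fun k l => l) (fun k l => k) 1 0); auto; [lra|]. intros; lra.
Qed.

Lemma Good2_sw' h : Good2 h -> Good2 (sw' h).
Proof.
  intros G. apply (Good2_map h (fun k l => (- l)%Z) (fun k l => (- k)%Z) 1 0); auto; [lra|].
  intros. rewrite !absZ_opp. lra.
Qed.

Lemma Good2_rf h : Good2 h -> Good2 (rf h).
Proof.
  intros G. apply (Good2_map h (fun k l => k) (fun k l => (- k - l - 1)%Z) 2 1); auto; [lra|].
  intros k l. rewrite !minus_IZR, opp_IZR. unfold Rabs; repeat destruct Rcase_abs; lra.
Qed.

Lemma Good2_rf' h : Good2 h -> Good2 (rf' h).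
Proof.
  intros G. apply (Good2_map h (fun k l => (- k)%Z) (fun k l => (k + l)%Z) 2 0); auto; [lra|].
  intros k l. rewrite plus_IZR, opp_IZR. unfold Rabs; repeat destruct Rcase_abs; lra.
Qed.

Lemma sum_sw h : Good2 h -> sumZ2 (sw h) = sumZ2 h.
Proof. intros G. apply sumZ2_swapG; auto. Qed.

Lemma sum_rf h : Good2 h -> sumZ2 (rf h) = sumZ2 h.
Proof.
  intros G. unfold rf. rewrite <- (sumZ2_inner_refl h (fun k => (- k - 1)%Z) G).
  apply sumZ2_ext. intros; f_equal; lia.
Qed.

Lemma sum_sw' h : Good2 h -> sumZ2 (sw' h) = sumZ2 h.
Proof.
  intros G.
  assert (G1 : Good2 (fun k l => h k (0 - l)%Z)).
  { apply (Good2_map h (fun k l => k) (fun k l => (0 - l)%Z) 1 0); auto; [lra|].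
    intros. replace (0 - l)%Z with (- l)%Z by lia. rewrite absZ_opp; lra. }
  assert (G2 : Good2 (fun k l => h (- k)%Z (0 - l)%Z)).
  { apply (Good2_map h (fun k l => (- k)%Z) (fun k l => (0 - l)%Z) 1 0); auto; [lra|].
    intros. replace (0 - l)%Z with (- l)%Z by lia. rewrite !absZ_opp; lra. }
  unfold sw'.
  transitivity (sumZ2 (sw (fun k l => h (- k)%Z (0 - l)%Z))).
  { apply sumZ2_ext. intros; unfold sw; f_equal; lia. }
  rewrite sum_sw; auto.
  rewrite (sumZ2_outer_neg (fun k l => h k (0 - l)%Z)); auto.
  apply (sumZ2_inner_refl h (fun _ => 0%Z) G).
Qed.

Lemma sum_rf' h : Good2 h -> sumZ2 (rf' h) = sumZ2 h.
Proof.
  intros G.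
  assert (G1 : Good2 (fun k l => h k (l + - k)%Z)).
  { apply (Good2_map h (fun k l => k) (fun k l => (l + - k)%Z) 2 0); auto; [lra|].
    intros k l. rewrite plus_IZR, opp_IZR. unfold Rabs; repeat destruct Rcase_abs; lra. }
  unfold rf'. transitivity (sumZ2 (fun k l => (fun k0 l0 => h k0 (l0 + - k0)%Z) (- k)%Z l)).
  { apply sumZ2_ext. intros; f_equal; lia. }
  rewrite (sumZ2_outer_neg (fun k l => h k (l + - k)%Z)); auto.
  apply (sumZ2_inner_shift h (fun k => (- k)%Z) G).
Qed.

Lemma zero_by_sym S T1 T2 T3 T4 T5 :
  Good2 S -> Good2 T1 -> Good2 T2 -> Good2 T3 -> Good2 T4 -> Good2 T5 ->
  sumZ2 T1 = sumZ2 S -> sumZ2 T2 = sumZ2 S -> sumZ2 T3 = sumZ2 S ->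
  sumZ2 T4 = sumZ2 S -> sumZ2 T5 = sumZ2 S ->
  (forall k l, S k l + T1 k l + T2 k l + T3 k l + T4 k l + T5 k l = 0) -> sumZ2 S = 0.
Proof.
  intros G0 G1 G2 G3 G4 G5 E1 E2 E3 E4 E5 Z.
  assert (sumZ2 (fun k l => S k l + T1 k l + T2 k l + T3 k l + T4 k l + T5 k l) = 6 * sumZ2 S).
  { rewrite !sumZ2_plus; repeat apply Good2_plus; auto. lra. }
  rewrite (sumZ2_ext _ (fun k l => 0 * S k l)) in H by (intros; rewrite Z; ring).
  rewrite sumZ2_scal in H. lra.
Qed.

Lemma theta_group S : Good2 S ->
  (forall k l, S k l + sw S k l + rf S k l + rf (sw S) k l + sw (rf S) k l + sw (rf (sw S)) k l = 0) ->
  sumZ2 S = 0.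
Proof.
  intros G Z.
  pose proof (Good2_sw S G) as G1. pose proof (Good2_rf S G) as G2.
  pose proof (Good2_rf _ G1) as G3. pose proof (Good2_sw _ G2) as G4. pose proof (Good2_sw _ G3) as G5.
  apply (zero_by_sym S (sw S) (rf S) (rf (sw S)) (sw (rf S)) (sw (rf (sw S)))); auto.
  - apply sum_sw; auto.
  - apply sum_rf; auto.
  - rewrite (sum_rf _ G1). apply sum_sw; auto.
  - rewrite (sum_sw _ G2). apply sum_rf; auto.
  - rewrite (sum_sw _ G3), (sum_rf _ G1). apply sum_sw; auto.
Qed.

Lemma hat_group S : Good2 S ->
  (forall k l, S k l + sw' S k l + rf' S k l + rf' (sw' S) k l + sw' (rf' S) k l + sw' (rf' (sw' S)) k l = 0) ->
  sumZ2 S = 0.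
Proof.
  intros G Z.
  pose proof (Good2_sw' S G) as G1. pose proof (Good2_rf' S G) as G2.
  pose proof (Good2_rf' _ G1) as G3. pose proof (Good2_sw' _ G2) as G4. pose proof (Good2_sw' _ G3) as G5.
  apply (zero_by_sym S (sw' S) (rf' S) (rf' (sw' S)) (sw' (rf' S)) (sw' (rf' (sw' S)))); auto.
  - apply sum_sw'; auto.
  - apply sum_rf'; auto.
  - rewrite (sum_rf' _ G1). apply sum_sw'; auto.
  - rewrite (sum_sw' _ G2). apply sum_rf'; auto.
  - rewrite (sum_sw' _ G3), (sum_rf' _ G1). apply sum_sw'; auto.
Qed.

Lemma sqrt3_pos : 0 < sqrt 3.
Proof. apply sqrt_lt_R0. lra. Qed.
Lemma sqrt3_sq : sqrt 3 * sqrt 3 = 3.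
Proof. apply sqrt_sqrt. lra. Qed.
Lemma y0_sq : (sqrt 3 / 2) ^ 2 = 3 / 4.
Proof. simpl. rewrite Rmult_1_r. replace (sqrt 3 / 2 * (sqrt 3 / 2)) with (sqrt 3 * sqrt 3 / 4) by field.
  rewrite sqrt3_sq. field. Qed.
Lemma y0_4 : (sqrt 3 / 2) ^ 4 = 9 / 16.
Proof. replace ((sqrt 3 / 2) ^ 4) with (((sqrt 3 / 2) ^ 2) ^ 2) by ring. rewrite y0_sq. field. Qed.

Definition cZ (i : nat) (u : R) : R := 0.
Lemma QF_cZ K L u : QF cZ K L u = 0.
Proof. unfold QF, cZ. ring. Qed.

Lemma cos_d x : is_derive cos x (- sin x).
Proof. auto_derive; auto; ring. Qed.
Lemma sin_d x : is_derive sin x (cos x).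
Proof. auto_derive; auto; ring. Qed.
Lemma ncos_d x : is_derive (fun y => - cos y) x (sin x).
Proof. auto_derive; auto; ring. Qed.
Lemma nsin_d x : is_derive (fun y => - sin y) x (- cos x).
Proof. auto_derive; auto; ring. Qed.
Lemma cos_b x : Rabs (cos x) <= 1. Proof. apply Rabs_le; apply COS_bound. Qed.
Lemma sin_b x : Rabs (sin x) <= 1. Proof. apply Rabs_le; apply SIN_bound. Qed.
Lemma ncos_b x : Rabs (- cos x) <= 1. Proof. rewrite Rabs_Ropp; apply cos_b. Qed.
Lemma nsin_b x : Rabs (- sin x) <= 1. Proof. rewrite Rabs_Ropp; apply sin_b. Qed.

Lemma good_term1 (cP cP1 cP2 cp cp1 cp2 : nat -> R -> R) (psi psi1 psi2 : R -> R) u :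
  (forall x, Rabs (psi x) <= 1) -> (forall x, Rabs (psi1 x) <= 1) -> (forall x, Rabs (psi2 x) <= 1) ->
  (forall i, (6 <= i)%nat -> forall u, cP i u = 0 /\ cP1 i u = 0 /\ cP2 i u = 0 /\ cp1 i u = 0 /\ cp2 i u = 0) ->
  cP 0%nat u - Rabs (cP 1%nat u) / 2 > 0 -> cP 2%nat u - Rabs (cP 1%nat u) / 2 > 0 ->
  Good2 (fun k l => term1 cP cP1 cp cp1 psi psi1 (IZR k) (IZR l) u).
Proof.
  intros B0 B1 B2 HZ P0 P2.
  destruct (fam_bound cP u 6 (fun i H u => proj1 (HZ i H u))) as [M1 H1].
  destruct (fam_bound cP1 u 6 (fun i H u => proj1 (proj2 (HZ i H u)))) as [M2 H2].
  destruct (fam_bound cP2 u 6 (fun i H u => proj1 (proj2 (proj2 (HZ i H u))))) as [M3 H3].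
  destruct (fam_bound cp1 u 6 (fun i H u => proj1 (proj2 (proj2 (proj2 (HZ i H u)))))) as [M4 H4].
  destruct (fam_bound cp2 u 6 (fun i H u => proj2 (proj2 (proj2 (proj2 (HZ i H u)))))) as [M5 H5].
  set (M := Rabs M1 + Rabs M2 + Rabs M3 + Rabs M4 + Rabs M5).
  set (g := Rmin (cP 0%nat u - Rabs (cP 1%nat u) / 2) (cP 2%nat u - Rabs (cP 1%nat u) / 2) / 2).
  pose proof (Rmin_l (cP 0%nat u - Rabs (cP 1%nat u) / 2) (cP 2%nat u - Rabs (cP 1%nat u) / 2)).
  pose proof (Rmin_r (cP 0%nat u - Rabs (cP 1%nat u) / 2) (cP 2%nat u - Rabs (cP 1%nat u) / 2)).
  assert (Hg : 0 < g) by (unfold g; apply Rmult_lt_0_compat; [apply Rmin_glb_lt; lra | lra]).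
  exists (Cst M g), (g / 2). split. lra.
  intros k l.
  assert (AM : forall a b, a <= b -> a <= M -> True) by auto.
  pose proof (Rle_abs M1). pose proof (Rle_abs M2). pose proof (Rle_abs M3). pose proof (Rle_abs M4). pose proof (Rle_abs M5).
  pose proof (Rabs_pos M1). pose proof (Rabs_pos M2). pose proof (Rabs_pos M3). pose proof (Rabs_pos M4). pose proof (Rabs_pos M5).
  refine (proj1 (proj2 (term_bounds cP cP1 cP2 cp cp1 cp2 psi psi1 psi2 k l u M g Hg B0 B1 B2 _ _ _ _ _ _ _))).
  all: try (intro i; specialize (H1 i); unfold M; lra).
  all: try (intro i; specialize (H2 i); unfold M; lra).
  all: try (intro i; specialize (H3 i); unfold M; lra).
  all: try (intro i; specialize (H4 i); unfold M; lra).
  all: try (intro i; specialize (H5 i); unfold M; lra).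
  all: unfold g; lra.
Qed.

Definition A0 (alpha : R) := PI * alpha / (sqrt 3 / 2).

Definition cTX (alpha : R) (i : nat) (u : R) : R :=
  match i with 0 => A0 alpha | 1 => 2 * u * A0 alpha | 2 => (u ^ 2 + 3 / 4) * A0 alpha
  | 3 => A0 alpha | 4 => (u + 1 / 2) * A0 alpha | 5 => A0 alpha / 3 | _ => 0 end.
Definition cTX1 (alpha : R) (i : nat) (u : R) : R :=
  match i with 1 => 2 * A0 alpha | 2 => 2 * u * A0 alpha | 4 => A0 alpha | _ => 0 end.
Definition cTX2 (alpha : R) (i : nat) (u : R) : R :=
  match i with 2 => 2 * A0 alpha | _ => 0 end.

Ltac cases_i i := destruct i as [|[|[|[|[|[|i]]]]]].

Lemma A0_pos alpha : 0 < alpha -> 0 < A0 alpha.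
Proof. intros. unfold A0. pose proof sqrt3_pos. pose proof PI_RGT_0. apply Rdiv_lt_0_compat; nra. Qed.

Lemma thetaX_eq alpha x :
  Theta_b alpha x (sqrt 3 / 2) = sumZ2 (fun k l => term (cTX alpha) cZ cos (IZR k) (IZR l) x).
Proof.
  unfold Theta_b, theta. apply sumZ2_ext. intros k l. unfold term. rewrite QF_cZ, cos_0, Rmult_1_r.
  f_equal. unfold b1, b2. rewrite y0_sq. unfold QF, cTX, A0. pose proof sqrt3_pos. field. lra.
Qed.

Lemma thetaX_deriv alpha : 0 < alpha ->
  is_derive (fun x => sumZ2 (fun k l => term (cTX alpha) cZ cos (IZR k) (IZR l) x)) (1 / 2)
    (sumZ2 (fun k l => term1 (cTX alpha) (cTX1 alpha) cZ cZ cos (fun x => - sin x) (IZR k) (IZR l) (1 / 2))).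
Proof.
  intros Ha. pose proof (A0_pos alpha Ha).
  apply (master _ _ (cTX2 alpha) _ _ cZ _ _ (fun x => - cos x) (1 / 2) 1); try lra.
  - exact cos_d. - exact nsin_d. - exact cos_b. - exact nsin_b. - exact ncos_b.
  - intros u _ i. unfold cTX, cTX1, cTX2, cZ. cases_i i; simpl; refine (conj _ (conj _ (conj _ _))); auto_derive; auto; ring.
  - intros i. unfold cTX2, cZ. cases_i i; simpl; split; auto_derive; auto.
  - intros i Hi u. cases_i i; try lia. simpl. unfold cZ. auto.
  - simpl. rewrite Rabs_pos_eq; lra.
  - simpl. rewrite Rabs_pos_eq; lra.
Qed.

Lemma thetaX_zero alpha : 0 < alpha ->
  sumZ2 (fun k l => term1 (cTX alpha) (cTX1 alpha) cZ cZ cos (fun x => - sin x) (IZR k) (IZR l) (1 / 2)) = 0.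
Proof.
  intros Ha. pose proof (A0_pos alpha Ha).
  apply theta_group.
  - apply (good_term1 _ _ (cTX2 alpha) _ _ cZ _ _ (fun x => - cos x)).
    exact cos_b. exact nsin_b. exact ncos_b.
    intros i Hi u. cases_i i; try lia. simpl. unfold cZ. auto.
    simpl. rewrite Rabs_pos_eq; lra. simpl. rewrite Rabs_pos_eq; lra.
  - intros k l. unfold sw, rf. rewrite !minus_IZR, !opp_IZR.
    set (K := IZR k). set (L := IZR l). clearbody K L.
    unfold term1. rewrite !QF_cZ, cos_0, sin_0.
    assert (E1 : QF (cTX alpha) L K (1/2) = QF (cTX alpha) K L (1/2)) by (unfold QF, cTX; cbn iota beta; field).
    assert (E2 : QF (cTX alpha) K (- K - L - 1) (1/2) = QF (cTX alpha) K L (1/2)) by (unfold QF, cTX; cbn iota beta; field).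
    assert (E3 : QF (cTX alpha) (- K - L - 1) K (1/2) = QF (cTX alpha) K L (1/2)) by (unfold QF, cTX; cbn iota beta; field).
    assert (E4 : QF (cTX alpha) L (- L - K - 1) (1/2) = QF (cTX alpha) K L (1/2)) by (unfold QF, cTX; cbn iota beta; field).
    assert (E5 : QF (cTX alpha) (- L - K - 1) L (1/2) = QF (cTX alpha) K L (1/2)) by (unfold QF, cTX; cbn iota beta; field).
    rewrite E1, E2, E3, E4, E5. unfold QF, cTX1, cZ; cbn iota beta. field.
Qed.

Definition cTY (alpha : R) (i : nat) (u : R) : R :=
  let a := PI * alpha in
  match i with 0 => a / u | 1 => a / u | 2 => a / u * (1 / 4 + u ^ 2)
  | 3 => a / u | 4 => a / u * (1 / 4 + u ^ 2) | 5 => a / u * (u ^ 2 / 4 + 1 / 8 + 1 / (64 * u ^ 2)) | _ => 0 end.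
Definition cTY1 (alpha : R) (i : nat) (u : R) : R :=
  let a := PI * alpha in
  match i with 0 => - a / u ^ 2 | 1 => - a / u ^ 2 | 2 => a - a / (4 * u ^ 2)
  | 3 => - a / u ^ 2 | 4 => a - a / (4 * u ^ 2) | 5 => a * (1 / 4 - 1 / (8 * u ^ 2) - 3 / (64 * u ^ 4)) | _ => 0 end.
Definition cTY2 (alpha : R) (i : nat) (u : R) : R :=
  let a := PI * alpha in
  match i with 0 => 2 * a / u ^ 3 | 1 => 2 * a / u ^ 3 | 2 => a / (2 * u ^ 3)
  | 3 => 2 * a / u ^ 3 | 4 => a / (2 * u ^ 3) | 5 => a * (1 / (4 * u ^ 3) + 3 / (16 * u ^ 5)) | _ => 0 end.

Ltac nz := first [ lra | (apply pow_nonzero; nz) | (apply Rmult_integral_contrapositive_currified; nz) | idtac ].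

Lemma sqrt3_gt : 1.6 < sqrt 3.
Proof.
  rewrite <- (sqrt_square 1.6) by lra. apply sqrt_lt_1; lra.
Qed.

Lemma thetaY_eq alpha u : 0 < u ->
  Theta_b alpha (1 / 2) u = sumZ2 (fun k l => term (cTY alpha) cZ cos (IZR k) (IZR l) u).
Proof.
  intros Hu.
  unfold Theta_b, theta. apply sumZ2_ext. intros k l. unfold term. rewrite QF_cZ, cos_0, Rmult_1_r.
  f_equal. unfold b1, b2. unfold QF, cTY. cbn iota beta zeta. field. lra.
Qed.

Lemma thetaY_deriv alpha : 0 < alpha ->
  is_derive (fun u => sumZ2 (fun k l => term (cTY alpha) cZ cos (IZR k) (IZR l) u)) (sqrt 3 / 2)
    (sumZ2 (fun k l => term1 (cTY alpha) (cTY1 alpha) cZ cZ cos (fun x => - sin x) (IZR k) (IZR l) (sqrt 3 / 2))).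
Proof.
  intros Ha. pose proof sqrt3_gt. pose proof PI_RGT_0.
  assert (Hpa : 0 < PI * alpha) by nra.
  apply (master _ _ (cTY2 alpha) _ _ cZ _ _ (fun x => - cos x) (sqrt 3 / 2) (1 / 2)); try lra.
  - exact cos_d. - exact nsin_d. - exact cos_b. - exact nsin_b. - exact ncos_b.
  - intros u Hu i. assert (0 < u) by (unfold Rabs in Hu; destruct Rcase_abs; lra).
    unfold cTY, cTY1, cTY2, cZ. cases_i i; cbn iota beta zeta; refine (conj _ (conj _ (conj _ _)));
    auto_derive; repeat split; try nz; field; repeat split; nz.
  - intros i. unfold cTY2, cZ. cases_i i; cbn iota beta zeta; split; auto_derive; repeat split; nz.
  - intros i Hi u. cases_i i; try lia. simpl. unfold cZ. auto.
  - unfold cTY; cbn iota beta zeta. rewrite Rabs_pos_eq. 2: left; apply Rdiv_lt_0_compat; lra.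
    assert (0 < PI * alpha / (sqrt 3 / 2)) by (apply Rdiv_lt_0_compat; lra). lra.
  - unfold cTY; cbn iota beta zeta. rewrite Rabs_pos_eq. 2: left; apply Rdiv_lt_0_compat; lra.
    rewrite y0_sq.
    assert (0 < PI * alpha / (sqrt 3 / 2)) by (apply Rdiv_lt_0_compat; lra). lra.
Qed.

Lemma thetaY_zero alpha : 0 < alpha ->
  sumZ2 (fun k l => term1 (cTY alpha) (cTY1 alpha) cZ cZ cos (fun x => - sin x) (IZR k) (IZR l) (sqrt 3 / 2)) = 0.
Proof.
  intros Ha. pose proof sqrt3_gt. pose proof PI_RGT_0.
  assert (Hpa : 0 < PI * alpha) by nra.
  assert (Hp : 0 < PI * alpha / (sqrt 3 / 2)) by (apply Rdiv_lt_0_compat; lra).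
  apply theta_group.
  - apply (good_term1 _ _ (cTY2 alpha) _ _ cZ _ _ (fun x => - cos x)).
    exact cos_b. exact nsin_b. exact ncos_b.
    intros i Hi u. cases_i i; try lia. simpl. unfold cZ. auto.
    unfold cTY; cbn iota beta zeta. rewrite Rabs_pos_eq; lra.
    unfold cTY; cbn iota beta zeta. rewrite Rabs_pos_eq, y0_sq; lra.
  - intros k l. unfold sw, rf. rewrite !minus_IZR, !opp_IZR.
    set (K := IZR k). set (L := IZR l). clearbody K L.
    unfold term1. rewrite !QF_cZ, cos_0, sin_0.
    set (u0 := sqrt 3 / 2).
    assert (Hu0 : u0 <> 0) by (unfold u0; lra).
    assert (Q : forall K' L', QF (cTY alpha) K' L' u0 =
      PI * alpha / u0 * (K' ^ 2 + K' * L' + L' ^ 2 + K' + L') + cTY alpha 5 u0).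
    { intros. unfold QF, cTY, u0. cbn iota beta zeta. rewrite y0_sq. field. lra. }
    rewrite !Q.
    assert (E1 : L ^ 2 + L * K + K ^ 2 + L + K = K ^ 2 + K * L + L ^ 2 + K + L) by ring.
    assert (E2 : K ^ 2 + K * (- K - L - 1) + (- K - L - 1) ^ 2 + K + (- K - L - 1) = K ^ 2 + K * L + L ^ 2 + K + L) by ring.
    assert (E3 : (- K - L - 1) ^ 2 + (- K - L - 1) * K + K ^ 2 + (- K - L - 1) + K = K ^ 2 + K * L + L ^ 2 + K + L) by ring.
    assert (E4 : L ^ 2 + L * (- L - K - 1) + (- L - K - 1) ^ 2 + L + (- L - K - 1) = K ^ 2 + K * L + L ^ 2 + K + L) by ring.
    assert (E5 : (- L - K - 1) ^ 2 + (- L - K - 1) * L + L ^ 2 + (- L - K - 1) + L = K ^ 2 + K * L + L ^ 2 + K + L) by ring.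
    rewrite E1, E2, E3, E4, E5.
    unfold QF, cTY1, cZ, u0. cbn iota beta zeta. rewrite y0_sq, y0_4. field.
Qed.

Lemma trig_2PIZ x n : cos (x + 2 * PI * IZR n) = cos x /\ sin (x + 2 * PI * IZR n) = sin x.
Proof.
  destruct (Z_le_gt_dec 0 n).
  - replace n with (Z.of_nat (Z.to_nat n)) by lia. rewrite <- INR_IZR_INZ.
    replace (x + 2 * PI * INR (Z.to_nat n)) with (x + 2 * INR (Z.to_nat n) * PI) by ring.
    split; [apply cos_period | apply sin_period].
  - set (m := Z.to_nat (- n)).
    assert (E : IZR n = - INR m) by (unfold m; rewrite INR_IZR_INZ, <- opp_IZR; f_equal; lia).
    rewrite E.
    pose proof (cos_period (x + 2 * PI * - INR m) m). pose proof (sin_period (x + 2 * PI * - INR m) m).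
    replace (x + 2 * PI * - INR m + 2 * INR m * PI) with x in * by ring. split; auto.
Qed.

Lemma is_derive_pairC (F1 F2 : R -> R) x l1 l2 :
  is_derive F1 x l1 -> is_derive F2 x l2 -> is_derive (fun u => (F1 u, F2 u) : C) x ((l1, l2) : C).
Proof.
  intros H1 H2.
  unfold is_derive in *.
  pose proof (filterdiff_comp'_2 F1 F2 (fun a b => (a, b) : prod_NormedModule R_AbsRing R_NormedModule R_NormedModule) x _ _ (fun a b => (a, b)) H1 H2) as H.
  apply H.
  apply (filterdiff_ext_lin _ (fun t => t)).
  apply filterdiff_ext with (fun t => t). intros [a b]; reflexivity.
  apply filterdiff_id. intros [a b]; reflexivity.
Qed.

Definition cHX (alpha : R) (i : nat) (u : R) : R :=
  match i with 0 => A0 alpha | 1 => 2 * u * A0 alpha | 2 => (u ^ 2 + 3 / 4) * A0 alpha | _ => 0 end.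
Definition cHX1 (alpha : R) (i : nat) (u : R) : R :=
  match i with 1 => 2 * A0 alpha | 2 => 2 * u * A0 alpha | _ => 0 end.
Definition cHX2 (alpha : R) (i : nat) (u : R) : R :=
  match i with 2 => 2 * A0 alpha | _ => 0 end.
Definition cpX (i : nat) (u : R) : R :=
  match i with 3 => 2 * PI / 3 | 4 => - PI + 2 * PI * u / 3 | _ => 0 end.
Definition cpX1 (i : nat) (u : R) : R :=
  match i with 4 => 2 * PI / 3 | _ => 0 end.

Lemma hatX_eq alpha x :
  ThetaHat_b alpha x (sqrt 3 / 2) =
  (sumZ2 (fun k l => term (cHX alpha) cpX cos (IZR k) (IZR l) x),
   sumZ2 (fun k l => term (cHX alpha) cpX sin (IZR k) (IZR l) x)).
Proof.
  unfold ThetaHat_b, thetahat. f_equal; apply sumZ2_ext; intros k l; unfold term, gaussw.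
  all: f_equal; [f_equal|f_equal]; unfold b1, b2; try rewrite y0_sq; unfold QF, cHX, cpX, A0;
    pose proof sqrt3_pos; field; lra.
Qed.

Section HX.
Variables (psi psi1 psi2 : R -> R).
Hypotheses (Hd : forall x, is_derive psi x (psi1 x)) (Hd1 : forall x, is_derive psi1 x (psi2 x))
  (B0 : forall x, Rabs (psi x) <= 1) (B1 : forall x, Rabs (psi1 x) <= 1) (B2 : forall x, Rabs (psi2 x) <= 1).

Lemma hatX_deriv alpha : 0 < alpha ->
  is_derive (fun x => sumZ2 (fun k l => term (cHX alpha) cpX psi (IZR k) (IZR l) x)) (1 / 2)
    (sumZ2 (fun k l => term1 (cHX alpha) (cHX1 alpha) cpX cpX1 psi psi1 (IZR k) (IZR l) (1 / 2))).
Proof.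
  intros Ha. pose proof (A0_pos alpha Ha).
  apply (master _ _ (cHX2 alpha) _ _ cZ _ _ psi2 (1 / 2) 1); auto; try lra.
  - intros u _ i. unfold cHX, cHX1, cHX2, cpX, cpX1, cZ. cases_i i; simpl; refine (conj _ (conj _ (conj _ _))); auto_derive; auto; field.
  - intros i. unfold cHX2, cZ. cases_i i; simpl; split; auto_derive; auto.
  - intros i Hi u. cases_i i; try lia. simpl. unfold cZ. auto.
  - simpl. rewrite Rabs_pos_eq; lra.
  - simpl. rewrite Rabs_pos_eq; lra.
Qed.

Lemma hatX_zero alpha : 0 < alpha ->
  (forall x n, psi (x + 2 * PI * IZR n) = psi x /\ psi1 (x + 2 * PI * IZR n) = psi1 x) ->
  sumZ2 (fun k l => term1 (cHX alpha) (cHX1 alpha) cpX cpX1 psi psi1 (IZR k) (IZR l) (1 / 2)) = 0.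
Proof.
  intros Ha Hper. pose proof (A0_pos alpha Ha).
  apply hat_group.
  - apply (good_term1 _ _ (cHX2 alpha) _ _ cZ _ _ psi2); auto.
    intros i Hi u. cases_i i; try lia. simpl. unfold cZ. auto.
    simpl. rewrite Rabs_pos_eq; lra. simpl. rewrite Rabs_pos_eq; lra.
  - intros k l. unfold sw', rf'. rewrite !Z.opp_involutive.
    replace (- (- l + - k))%Z with (l + k)%Z by lia.
    repeat rewrite ?opp_IZR, ?plus_IZR.
    set (K := IZR k). set (L := IZR l).
    unfold term1.
    assert (Q : forall K' L', QF (cHX alpha) K' L' (1/2) = A0 alpha * (K' ^ 2 + K' * L' + L' ^ 2)).
    { intros. unfold QF, cHX. cbn iota beta. field. }
    rewrite !Q.
    replace ((- L) ^ 2 + - L * - K + (- K) ^ 2) with (K ^ 2 + K * L + L ^ 2) by ring.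
    replace ((- K) ^ 2 + - K * (K + L) + (K + L) ^ 2) with (K ^ 2 + K * L + L ^ 2) by ring.
    replace ((- (K + L)) ^ 2 + - (K + L) * K + K ^ 2) with (K ^ 2 + K * L + L ^ 2) by ring.
    replace (L ^ 2 + L * (- L + - K) + (- L + - K) ^ 2) with (K ^ 2 + K * L + L ^ 2) by ring.
    replace ((L + K) ^ 2 + (L + K) * - L + (- L) ^ 2) with (K ^ 2 + K * L + L ^ 2) by ring.
    assert (T : forall K' L', QF cpX K' L' (1/2) = 2 * PI / 3 * (K' - L')).
    { intros. unfold QF, cpX. cbn iota beta. field. }
    rewrite !T.
    replace (2 * PI / 3 * (- L - - K)) with (2 * PI / 3 * (K - L)) by ring.
    replace (2 * PI / 3 * (- K - (K + L))) with (2 * PI / 3 * (K - L) + 2 * PI * IZR (- k)) by (rewrite opp_IZR; unfold K; field).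
    replace (2 * PI / 3 * (- (K + L) - K)) with (2 * PI / 3 * (K - L) + 2 * PI * IZR (- k)) by (rewrite opp_IZR; unfold K; field).
    replace (2 * PI / 3 * (L - (- L + - K))) with (2 * PI / 3 * (K - L) + 2 * PI * IZR l) by (unfold L; field).
    replace (2 * PI / 3 * (L + K - - L)) with (2 * PI / 3 * (K - L) + 2 * PI * IZR l) by (unfold L; field).
    rewrite !(proj1 (Hper _ _)), !(proj2 (Hper _ _)).
    clearbody K L. unfold QF, cHX1, cpX1. cbn iota beta. field.
Qed.
End HX.

Definition cHY (alpha : R) (i : nat) (u : R) : R :=
  let a := PI * alpha in
  match i with 0 => a / u | 1 => a / u | 2 => a / u * (1 / 4 + u ^ 2) | _ => 0 end.
Definition cHY1 (alpha : R) (i : nat) (u : R) : R :=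
  let a := PI * alpha in
  match i with 0 => - a / u ^ 2 | 1 => - a / u ^ 2 | 2 => a - a / (4 * u ^ 2) | _ => 0 end.
Definition cHY2 (alpha : R) (i : nat) (u : R) : R :=
  let a := PI * alpha in
  match i with 0 => 2 * a / u ^ 3 | 1 => 2 * a / u ^ 3 | 2 => a / (2 * u ^ 3) | _ => 0 end.
Definition cpY (i : nat) (u : R) : R :=
  match i with 3 => PI - PI / (4 * u ^ 2) | 4 => - PI / 2 - PI / (8 * u ^ 2) | _ => 0 end.
Definition cpY1 (i : nat) (u : R) : R :=
  match i with 3 => PI / (2 * u ^ 3) | 4 => PI / (4 * u ^ 3) | _ => 0 end.
Definition cpY2 (i : nat) (u : R) : R :=
  match i with 3 => - 3 * PI / (2 * u ^ 4) | 4 => - 3 * PI / (4 * u ^ 4) | _ => 0 end.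

Lemma hatY_eq alpha u : 0 < u ->
  ThetaHat_b alpha (1 / 2) u =
  (sumZ2 (fun k l => term (cHY alpha) cpY cos (IZR k) (IZR l) u),
   sumZ2 (fun k l => term (cHY alpha) cpY sin (IZR k) (IZR l) u)).
Proof.
  intros Hu.
  unfold ThetaHat_b, thetahat. f_equal; apply sumZ2_ext; intros k l; unfold term, gaussw.
  all: f_equal; [f_equal|f_equal]; unfold b1, b2; unfold QF, cHY, cpY; cbn iota beta zeta; field; lra.
Qed.

Section HY.
Variables (psi psi1 psi2 : R -> R).
Hypotheses (Hd : forall x, is_derive psi x (psi1 x)) (Hd1 : forall x, is_derive psi1 x (psi2 x))
  (B0 : forall x, Rabs (psi x) <= 1) (B1 : forall x, Rabs (psi1 x) <= 1) (B2 : forall x, Rabs (psi2 x) <= 1).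

Lemma hatY_deriv alpha : 0 < alpha ->
  is_derive (fun u => sumZ2 (fun k l => term (cHY alpha) cpY psi (IZR k) (IZR l) u)) (sqrt 3 / 2)
    (sumZ2 (fun k l => term1 (cHY alpha) (cHY1 alpha) cpY cpY1 psi psi1 (IZR k) (IZR l) (sqrt 3 / 2))).
Proof.
  intros Ha. pose proof sqrt3_gt. pose proof PI_RGT_0.
  assert (Hpa : 0 < PI * alpha) by nra.
  apply (master _ _ (cHY2 alpha) _ _ cpY2 _ _ psi2 (sqrt 3 / 2) (1 / 2)); auto; try lra.
  - intros u Hu i. assert (0 < u) by (unfold Rabs in Hu; destruct Rcase_abs; lra).
    unfold cHY, cHY1, cHY2, cpY, cpY1, cpY2. cases_i i; cbn iota beta zeta; refine (conj _ (conj _ (conj _ _)));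
    auto_derive; repeat split; try nz; field; repeat split; nz.
  - intros i. unfold cHY2, cpY2. cases_i i; cbn iota beta zeta; split; auto_derive; repeat split; nz.
  - intros i Hi u. cases_i i; try lia. simpl. auto.
  - unfold cHY; cbn iota beta zeta. rewrite Rabs_pos_eq. 2: left; apply Rdiv_lt_0_compat; lra.
    assert (0 < PI * alpha / (sqrt 3 / 2)) by (apply Rdiv_lt_0_compat; lra). lra.
  - unfold cHY; cbn iota beta zeta. rewrite Rabs_pos_eq. 2: left; apply Rdiv_lt_0_compat; lra.
    rewrite y0_sq.
    assert (0 < PI * alpha / (sqrt 3 / 2)) by (apply Rdiv_lt_0_compat; lra). lra.
Qed.

Lemma hatY_zero alpha : 0 < alpha ->
  (forall x n, psi (x + 2 * PI * IZR n) = psi x /\ psi1 (x + 2 * PI * IZR n) = psi1 x) ->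
  sumZ2 (fun k l => term1 (cHY alpha) (cHY1 alpha) cpY cpY1 psi psi1 (IZR k) (IZR l) (sqrt 3 / 2)) = 0.
Proof.
  intros Ha Hper. pose proof sqrt3_gt. pose proof PI_RGT_0.
  assert (Hpa : 0 < PI * alpha) by nra.
  assert (Hp : 0 < PI * alpha / (sqrt 3 / 2)) by (apply Rdiv_lt_0_compat; lra).
  apply hat_group.
  - apply (good_term1 _ _ (cHY2 alpha) _ _ cpY2 _ _ psi2); auto.
    intros i Hi u. cases_i i; try lia. simpl. auto.
    unfold cHY; cbn iota beta zeta. rewrite Rabs_pos_eq; lra.
    unfold cHY; cbn iota beta zeta. rewrite Rabs_pos_eq, y0_sq; lra.
  - intros k l. unfold sw', rf'. rewrite !Z.opp_involutive.
    replace (- (- l + - k))%Z with (l + k)%Z by lia.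
    repeat rewrite ?opp_IZR, ?plus_IZR.
    set (K := IZR k). set (L := IZR l).
    unfold term1.
    set (u0 := sqrt 3 / 2).
    assert (Hu0 : u0 <> 0) by (unfold u0; lra).
    assert (Q : forall K' L', QF (cHY alpha) K' L' u0 = PI * alpha / u0 * (K' ^ 2 + K' * L' + L' ^ 2)).
    { intros. unfold QF, cHY, u0. cbn iota beta zeta. rewrite y0_sq. field. lra. }
    rewrite !Q.
    replace ((- L) ^ 2 + - L * - K + (- K) ^ 2) with (K ^ 2 + K * L + L ^ 2) by ring.
    replace ((- K) ^ 2 + - K * (K + L) + (K + L) ^ 2) with (K ^ 2 + K * L + L ^ 2) by ring.
    replace ((- (K + L)) ^ 2 + - (K + L) * K + K ^ 2) with (K ^ 2 + K * L + L ^ 2) by ring.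
    replace (L ^ 2 + L * (- L + - K) + (- L + - K) ^ 2) with (K ^ 2 + K * L + L ^ 2) by ring.
    replace ((L + K) ^ 2 + (L + K) * - L + (- L) ^ 2) with (K ^ 2 + K * L + L ^ 2) by ring.
    assert (T : forall K' L', QF cpY K' L' u0 = 2 * PI / 3 * (K' - L')).
    { intros. unfold QF, cpY, u0. cbn iota beta. rewrite y0_sq. field. }
    rewrite !T.
    replace (2 * PI / 3 * (- L - - K)) with (2 * PI / 3 * (K - L)) by ring.
    replace (2 * PI / 3 * (- K - (K + L))) with (2 * PI / 3 * (K - L) + 2 * PI * IZR (- k)) by (rewrite opp_IZR; unfold K; field).
    replace (2 * PI / 3 * (- (K + L) - K)) with (2 * PI / 3 * (K - L) + 2 * PI * IZR (- k)) by (rewrite opp_IZR; unfold K; field).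
    replace (2 * PI / 3 * (L - (- L + - K))) with (2 * PI / 3 * (K - L) + 2 * PI * IZR l) by (unfold L; field).
    replace (2 * PI / 3 * (L + K - - L)) with (2 * PI / 3 * (K - L) + 2 * PI * IZR l) by (unfold L; field).
    rewrite !(proj1 (Hper _ _)), !(proj2 (Hper _ _)).
    clearbody K L. unfold QF, cHY1, cpY1, u0. cbn iota beta zeta. rewrite y0_sq. field. lra.
Qed.
End HY.

Lemma per_cos x n : cos (x + 2 * PI * IZR n) = cos x /\ (fun y => - sin y) (x + 2 * PI * IZR n) = (fun y => - sin y) x.
Proof. destruct (trig_2PIZ x n) as [A B]. simpl. rewrite A, B. auto. Qed.
Lemma per_sin x n : sin (x + 2 * PI * IZR n) = sin x /\ cos (x + 2 * PI * IZR n) = cos x.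
Proof. destruct (trig_2PIZ x n) as [A B]. rewrite A, B. auto. Qed.

Lemma near_pos : locally (sqrt 3 / 2) (fun t => 0 < t).
Proof.
  pose proof sqrt3_gt.
  assert (Hp : 0 < 1 / 2) by lra.
  exists (mkposreal _ Hp). intros y Hy. unfold ball in Hy; simpl in Hy.
  unfold AbsRing_ball, abs, minus, plus, opp in Hy; simpl in Hy.
  unfold Rabs in Hy; destruct Rcase_abs in Hy; lra.
Qed.

Theorem lemma4p1 (alpha : R) (Halpha : 0 < alpha) :
  is_derive (fun x => Theta_b alpha x (sqrt 3 / 2)) (1 / 2) 0 /\
  is_derive (fun y => Theta_b alpha (1 / 2) y) (sqrt 3 / 2) 0 /\
  is_derive (fun x => ThetaHat_b alpha x (sqrt 3 / 2)) (1 / 2) (0 : C) /\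
  is_derive (fun y => ThetaHat_b alpha (1 / 2) y) (sqrt 3 / 2) (0 : C).
Proof.
  split; [|split; [|split]].
  - pose proof (thetaX_deriv alpha Halpha) as D. rewrite (thetaX_zero alpha Halpha) in D.
    apply (is_derive_ext _ _ _ _ (fun x => eq_sym (thetaX_eq alpha x)) D).
  - pose proof (thetaY_deriv alpha Halpha) as D. rewrite (thetaY_zero alpha Halpha) in D.
    apply (is_derive_ext_loc _ _ _ _ (filter_imp _ _ (fun t Ht => eq_sym (thetaY_eq alpha t Ht)) near_pos) D).
  - pose proof (hatX_deriv cos (fun x : R => - sin x) (fun x : R => - cos x) cos_d nsin_d cos_b nsin_b ncos_b alpha Halpha) as D1.
    rewrite (hatX_zero _ _ _ cos_b nsin_b ncos_b alpha Halpha per_cos) in D1.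
    pose proof (hatX_deriv sin cos (fun x : R => - sin x) sin_d cos_d sin_b cos_b nsin_b alpha Halpha) as D2.
    rewrite (hatX_zero _ _ _ sin_b cos_b nsin_b alpha Halpha per_sin) in D2.
    pose proof (is_derive_pairC _ _ _ _ _ D1 D2) as D.
    apply (is_derive_ext _ _ _ _ (fun x => eq_sym (hatX_eq alpha x)) D).
  - pose proof (hatY_deriv cos (fun x : R => - sin x) (fun x : R => - cos x) cos_d nsin_d cos_b nsin_b ncos_b alpha Halpha) as D1.
    rewrite (hatY_zero _ _ _ cos_b nsin_b ncos_b alpha Halpha per_cos) in D1.
    pose proof (hatY_deriv sin cos (fun x : R => - sin x) sin_d cos_d sin_b cos_b nsin_b alpha Halpha) as D2.
    rewrite (hatY_zero _ _ _ sin_b cos_b nsin_b alpha Halpha per_sin) in D2.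
    pose proof (is_derive_pairC _ _ _ _ _ D1 D2) as D.
    apply (is_derive_ext_loc _ _ _ _ (filter_imp _ _ (fun t Ht => eq_sym (hatY_eq alpha t Ht)) near_pos) D).
Qed.
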